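(* There exist constants $K$ and $M$ such that the following holds. Let $k,k'$ be integers with $K\le k<k'\le2k$, let $a,b\in(\frac1{10},10)$ with $k'\sqrt b<k\sqrt a$, so that $\cos(kx)e^{-k\sqrt a\,t}$ and $\cos(k'y)e^{-k'\sqrt b\,t}$ both solve $\ddot u+\operatorname{div}\left[\begin{pmatrix}a&0\\0&b\end{pmatrix}\nabla u\right]=0$. Let $$C=\frac1{k^{4/3}}+\frac{8\ln k}{k\sqrt a-k'\sqrt b}+\frac{\sqrt{4\ln k}}{(k')^{1/3}}+\frac1{100}.$$ Then for every $t_1\ge0$ and $c_1>0$, with $c_2>0$ defined by $c_1e^{-k\sqrt a\,t_1}=c_2e^{-k'\sqrt b\,t_1}$, one can transform $c_1\cos(kx)e^{-k\sqrt a\,t}$ into $c_2\cos(k'y)e^{-k'\sqrt b\,t}$ within $\mathbb{T}^2\times[t_1,t_1+C]$ via a solution $u$ of $\ddot u+\operatorname{div}(A\nabla u)=0$ with $A$ in the regularity class $R(20,10)$. Moreover, for $t\in[t_1,t_1+C]$, $u=f(t)\cos(kx)+g(t)\cos(k'y)$ with $f,g\in C^2$ and, for $0\le\alpha\le2$, $|f^{(\alpha)}(t)|\le Mc_1k^{7\alpha/3}e^{-k\sqrt a\,t}$ and $|g^{(\alpha)}(t)|\le Mc_2(k')^\alpha e^{-k'\sqrt b\,t}$.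
   Context: $\mathbb{T}^2=(\mathbb{R}/2\pi\mathbb{Z})^2$ with coordinates $(x,y)$; $t$ the third coordinate. $\ddot u+\operatorname{div}(A\nabla u)$ means $\partial_t^2u+\sum_{i,j\in\{x,y\}}\partial_i(A_{ij}\partial_ju)$ for a real $2\times2$ matrix function $A$. ''Transform $u_1$ into $u_2$ within $\mathbb{T}^2\times[T_1,T_2]$ via $u$'' here means: $u$ is $C^2$, $A$ is $C^1$, $\ddot u+\operatorname{div}(A\nabla u)=0$ on $\mathbb{T}^2\times\mathbb{R}$, $u=u_1$ for $t\le T_1$, $u=u_2$ for $t\ge T_2$, and $A=\begin{pmatrix}a&0\\0&b\end{pmatrix}$ for $t\le T_1$ and for $t\ge T_2$. Regularity class $R(\Lambda,C)$: $\Lambda^{-1}|\xi|^2\le\xi^TA\xi\le\Lambda|\xi|^2$ for all $\xi\in\mathbb{R}^2$ at every point, and the entries of $A$ are $C^1$ with all first partial derivatives in $x,y,t$ bounded by $C$ in absolute value. *)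

(* Defs.v *)
From Stdlib Require Import Reals.
From Coquelicot Require Import Coquelicot.
Open Scope R_scope.

(* Functions on T^2 x R are functions f x y t on R^3 (periodicity imposed separately). *)
Definition fn3 := R -> R -> R -> R.

Definition dx (f : fn3) : fn3 := fun x y t => Derive (fun s => f s y t) x.
Definition dy (f : fn3) : fn3 := fun x y t => Derive (fun s => f x s t) y.
Definition dt (f : fn3) : fn3 := fun x y t => Derive (fun s => f x y s) t.

Definition cont3 (f : fn3) : Prop :=
  forall x y t : R,
    continuous (fun p : R * R * R => f (fst (fst p)) (snd (fst p)) (snd p)) (x, y, t).

Definition C1_3 (f : fn3) : Prop :=
  (forall x y t : R,
      ex_derive (fun s => f s y t) x /\ ex_derive (fun s => f x s t) y
      /\ ex_derive (fun s => f x y s) t)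
  /\ cont3 f /\ cont3 (dx f) /\ cont3 (dy f) /\ cont3 (dt f).

Definition C2_3 (f : fn3) : Prop :=
  C1_3 f /\ C1_3 (dx f) /\ C1_3 (dy f) /\ C1_3 (dt f).

Definition periodic_T2 (f : fn3) : Prop :=
  forall x y t : R, f (x + 2 * PI) y t = f x y t /\ f x (y + 2 * PI) t = f x y t.

Record mat2 := Mat2 { m11 : R; m12 : R; m21 : R; m22 : R }.
Definition matfn := R -> R -> R -> mat2.
Definition e11 (A : matfn) : fn3 := fun x y t => m11 (A x y t).
Definition e12 (A : matfn) : fn3 := fun x y t => m12 (A x y t).
Definition e21 (A : matfn) : fn3 := fun x y t => m21 (A x y t).
Definition e22 (A : matfn) : fn3 := fun x y t => m22 (A x y t).

Definition matfn_C1 (A : matfn) : Prop :=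
  C1_3 (e11 A) /\ C1_3 (e12 A) /\ C1_3 (e21 A) /\ C1_3 (e22 A).

Definition matfn_periodic (A : matfn) : Prop :=
  periodic_T2 (e11 A) /\ periodic_T2 (e12 A) /\ periodic_T2 (e21 A) /\ periodic_T2 (e22 A).

Definition wave_op (A : matfn) (u : fn3) : fn3 := fun x y t =>
  dt (dt u) x y t
  + dx (fun x y t => e11 A x y t * dx u x y t + e12 A x y t * dy u x y t) x y t
  + dy (fun x y t => e21 A x y t * dx u x y t + e22 A x y t * dy u x y t) x y t.

Definition diagmat (a b : R) : mat2 := Mat2 a 0 0 b.

Definition transforms (a b : R) (u1 u2 : fn3) (T1 T2 : R) (u : fn3) (A : matfn) : Prop :=
  periodic_T2 u /\ matfn_periodic A /\
  C2_3 u /\ matfn_C1 A /\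
  (forall x y t, wave_op A u x y t = 0) /\
  (forall x y t, t <= T1 -> u x y t = u1 x y t) /\
  (forall x y t, T2 <= t -> u x y t = u2 x y t) /\
  (forall x y t, t <= T1 -> A x y t = diagmat a b) /\
  (forall x y t, T2 <= t -> A x y t = diagmat a b).

Definition quadform (M : mat2) (xi1 xi2 : R) : R :=
  xi1 * (m11 M * xi1 + m12 M * xi2) + xi2 * (m21 M * xi1 + m22 M * xi2).

Definition bounded_partials (f : fn3) (C : R) : Prop :=
  forall x y t, Rabs (dx f x y t) <= C /\ Rabs (dy f x y t) <= C /\ Rabs (dt f x y t) <= C.

Definition reg_class (Lam C : R) (A : matfn) : Prop :=
  (forall x y t xi1 xi2 : R,
      / Lam * (xi1 ^ 2 + xi2 ^ 2) <= quadform (A x y t) xi1 xi2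
      /\ quadform (A x y t) xi1 xi2 <= Lam * (xi1 ^ 2 + xi2 ^ 2))
  /\ matfn_C1 A
  /\ bounded_partials (e11 A) C /\ bounded_partials (e12 A) C
  /\ bounded_partials (e21 A) C /\ bounded_partials (e22 A) C.

Definition C2_1 (f : R -> R) : Prop :=
  (forall t, ex_derive f t) /\ (forall t, ex_derive (Derive f) t)
  /\ (forall t, continuous f t) /\ (forall t, continuous (Derive f) t)
  /\ (forall t, continuous (Derive (Derive f)) t).

(* Main.v *)
Require Import Defs.
From Stdlib Require Import Reals Lra Psatz FunctionalExtensionality ZArith.
From Coquelicot Require Import Coquelicot.
Open Scope R_scope.


Lemma glue_derive (F G1 G2 : R -> R) c r l :
  0 < r ->
  (forall y, c - r < y <= c -> F y = G1 y) ->
  (forall y, c <= y < c + r -> F y = G2 y) ->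
  is_derive G1 c l -> is_derive G2 c l -> is_derive F c l.
Proof.
  intros Hr H1 H2 D1 D2.
  apply is_derive_Reals in D1. apply is_derive_Reals in D2. apply is_derive_Reals.
  intros e He.
  destruct (D1 e He) as [d1 Hd1]. destruct (D2 e He) as [d2 Hd2].
  assert (Hp : 0 < Rmin r (Rmin d1 d2)).
  { apply Rmin_pos; [lra| apply Rmin_pos; apply cond_pos]. }
  exists (mkposreal _ Hp). intros h Hh0 Hh. simpl in Hh.
  assert (Ha : Rabs h < r) by (eapply Rlt_le_trans; [exact Hh| apply Rmin_l]).
  assert (Hb : Rabs h < d1).
  { eapply Rlt_le_trans; [exact Hh|]. eapply Rle_trans; [apply Rmin_r| apply Rmin_l]. }
  assert (Hc : Rabs h < d2).
  { eapply Rlt_le_trans; [exact Hh|]. eapply Rle_trans; [apply Rmin_r| apply Rmin_r]. }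
  apply Rabs_def2 in Ha.
  destruct (Rle_lt_dec h 0) as [Hn|Hn].
  - rewrite (H1 (c+h)) by lra. rewrite (H1 c) by lra. apply Hd1; auto.
  - rewrite (H2 (c+h)) by lra. rewrite (H2 c) by lra. apply Hd2; auto.
Qed.

Lemma isd_const (c x : R) : is_derive (fun _ : R => c) x 0.
Proof. auto_derive; auto. Qed.

Definition pw (lo hi : R) (P : R -> R) (x : R) : R :=
  if Rle_dec x 0 then lo else if Rle_dec 1 x then hi else P x.

Lemma pw_lo lo hi P x : x <= 0 -> pw lo hi P x = lo.
Proof. intros; unfold pw; destruct (Rle_dec x 0); [auto|lra]. Qed.
Lemma pw_hi lo hi P x : 1 <= x -> pw lo hi P x = hi.
Proof. intros; unfold pw; destruct (Rle_dec x 0); [lra|]. destruct (Rle_dec 1 x); [auto|lra]. Qed.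
Lemma pw_mid lo hi P x : 0 < x < 1 -> pw lo hi P x = P x.
Proof. intros; unfold pw; destruct (Rle_dec x 0); [lra|]. destruct (Rle_dec 1 x); [lra|auto]. Qed.

Lemma pw_derive lo hi (P P' : R -> R) :
  (forall x, is_derive P x (P' x)) -> P 0 = lo -> P 1 = hi -> P' 0 = 0 -> P' 1 = 0 ->
  forall x, is_derive (pw lo hi P) x (pw 0 0 P' x).
Proof.
  intros HD H0 H1 H0' H1' x.
  destruct (Rlt_le_dec x 0) as [Hx|Hx].
  { rewrite pw_lo by lra. apply is_derive_ext_loc with (fun _ => lo).
    - apply locally_interval with m_infty 0; simpl; auto. intros y _ Hy. rewrite pw_lo; lra.
    - apply isd_const. }
  destruct (Req_dec x 0) as [Hx0|Hx0].
  { subst x. rewrite pw_lo by lra. apply glue_derive with (fun _ => lo) P 1; try lra.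
    - intros y Hy. rewrite pw_lo; lra.
    - intros y Hy. destruct (Req_dec y 0). subst. rewrite pw_lo; lra. rewrite pw_mid; lra.
    - apply isd_const.
    - pose proof (HD 0) as D; rewrite H0' in D; exact D. }
  destruct (Rlt_le_dec x 1) as [Hx1|Hx1].
  { rewrite pw_mid by lra. apply is_derive_ext_loc with P; [|apply HD].
    apply locally_interval with 0 1; simpl; try lra. intros y Hy Hy'. rewrite pw_mid; lra. }
  destruct (Req_dec x 1) as [Hx2|Hx2].
  { subst x. rewrite pw_hi by lra. apply glue_derive with P (fun _ => hi) 1; try lra.
    - intros y Hy. destruct (Req_dec y 1). subst. rewrite pw_hi; lra. rewrite pw_mid; lra.
    - intros y Hy. rewrite pw_hi; lra.
    - pose proof (HD 1) as D; rewrite H1' in D; exact D.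
    - apply isd_const. }
  rewrite pw_hi by lra. apply is_derive_ext_loc with (fun _ => hi).
  - apply locally_interval with 1 p_infty; simpl; try lra; auto. intros y Hy _. rewrite pw_hi; lra.
  - apply isd_const.
Qed.

Definition clamp (x : R) := (Rabs x - Rabs (x - 1) + 1) / 2.
Lemma pw_clamp lo hi P x : P 0 = lo -> P 1 = hi -> pw lo hi P x = P (clamp x).
Proof.
  intros H0 H1. unfold clamp.
  destruct (Rle_lt_dec x 0).
  - rewrite pw_lo by lra. rewrite Rabs_left1, Rabs_left1 by lra. rewrite <- H0; f_equal; lra.
  - destruct (Rle_lt_dec 1 x).
    + rewrite pw_hi by lra. rewrite Rabs_right, Rabs_right by lra. rewrite <- H1; f_equal; lra.
    + rewrite pw_mid by lra. rewrite Rabs_right, Rabs_left1 by lra. f_equal; lra.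
Qed.

Lemma clamp_eq (y : R) : (Rabs y + -1 * Rabs (y + -1) + 1) * / 2 = (Rabs y - Rabs (y - 1) + 1) / 2.
Proof. replace (y + -1) with (y - 1) by ring. field. Qed.

Lemma clamp_cont x : continuous clamp x.
Proof.
  unfold clamp.
  apply (continuous_ext (fun x => (Rabs x + (-1) * Rabs (x + (-1)) + 1) * / 2)).
  { intros y; apply clamp_eq. }
  apply (continuous_mult (fun x => (Rabs x + (-1) * Rabs (x + (-1)) + 1)) (fun _ => /2)); [|apply continuous_const].
  apply (continuous_plus (fun x => (Rabs x + (-1) * Rabs (x + (-1)))) (fun _ => 1)); [|apply continuous_const].
  apply (continuous_plus Rabs (fun x => (-1) * Rabs (x + (-1)))). apply continuous_Rabs.
  apply (continuous_mult (fun _ => -1) (fun x => Rabs (x + -1))). apply continuous_const.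
  apply continuous_Rabs_comp.
  apply (continuous_plus (fun x => x) (fun _ => -1)). apply continuous_id. apply continuous_const.
Qed.

Lemma pw_cont lo hi P x : (forall y, continuous P y) -> P 0 = lo -> P 1 = hi -> continuous (pw lo hi P) x.
Proof.
  intros HC H0 H1. apply (continuous_ext (fun x => P (clamp x))).
  { intros; rewrite pw_clamp; auto. }
  apply continuous_comp. apply clamp_cont. apply HC.
Qed.

Definition P0 x := x^4 * (35 - 84*x + 70*x^2 - 20*x^3).
Definition P1 x := 140 * x^3 * (1-x)^3.
Definition P2 x := 420 * x^2 * (1-x)^2 * (1 - 2*x).
Definition P3 x := 840 * x * (1-x) * (1 - 5*x + 5*x^2).
Definition s0 := pw 0 1 P0.
Definition s1 := pw 0 0 P1.
Definition s2 := pw 0 0 P2.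
Definition s3 := pw 0 0 P3.

Lemma s0_d x : is_derive s0 x (s1 x).
Proof. apply pw_derive; unfold P0, P1; try (intros; auto_derive; auto; ring); ring. Qed.
Lemma s1_d x : is_derive s1 x (s2 x).
Proof. apply pw_derive; unfold P1, P2; try (intros; auto_derive; auto; ring); ring. Qed.
Lemma s2_d x : is_derive s2 x (s3 x).
Proof. apply pw_derive; unfold P2, P3; try (intros; auto_derive; auto; ring); ring. Qed.
Lemma s3_c x : continuous s3 x.
Proof. unfold s3; apply pw_cont; [| unfold P3; lra | unfold P3; lra]. intros y.
  apply (ex_derive_continuous (fun x => 840 * x * (1-x) * (1 - 5*x + 5*x^2))). auto_derive; auto. Qed.
Lemma s0_c x : continuous s0 x. Proof. apply (ex_derive_continuous s0); eexists; apply s0_d. Qed.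
Lemma s1_c x : continuous s1 x. Proof. apply (ex_derive_continuous s1); eexists; apply s1_d. Qed.
Lemma s2_c x : continuous s2 x. Proof. apply (ex_derive_continuous s2); eexists; apply s2_d. Qed.

Lemma s0_lo x : x <= 0 -> s0 x = 0. Proof. apply pw_lo. Qed.
Lemma s0_hi x : 1 <= x -> s0 x = 1. Proof. apply pw_hi. Qed.
Lemma s1_out x : x <= 0 \/ 1 <= x -> s1 x = 0.
Proof. intros [H|H]; [apply pw_lo|apply pw_hi]; auto. Qed.
Lemma s2_out x : x <= 0 \/ 1 <= x -> s2 x = 0.
Proof. intros [H|H]; [apply pw_lo|apply pw_hi]; auto. Qed.
Lemma s3_out x : x <= 0 \/ 1 <= x -> s3 x = 0.
Proof. intros [H|H]; [apply pw_lo|apply pw_hi]; auto. Qed.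

Lemma pw_bound0 P B x : 0 <= B -> (forall y, 0 < y < 1 -> Rabs (P y) <= B) -> Rabs (pw 0 0 P x) <= B.
Proof.
  intros HB H. destruct (Rle_lt_dec x 0). rewrite pw_lo by lra; rewrite Rabs_R0; lra.
  destruct (Rle_lt_dec 1 x). rewrite pw_hi by lra; rewrite Rabs_R0; lra.
  rewrite pw_mid by lra. apply H; lra.
Qed.

Lemma s1_b x : Rabs (s1 x) <= 3.
Proof. apply pw_bound0; [lra|]. intros y Hy. unfold P1.
  assert (0 <= y * (1 - y) <= 1/4) by (pose proof (pow2_ge_0 (y - 1/2)); split; nra).
  rewrite Rabs_right. 2: { apply Rle_ge. replace (140 * y ^ 3 * (1 - y) ^ 3) with (140 * (y*(1-y))^3) by ring.
    apply Rmult_le_pos; [lra| apply pow_le; lra]. }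
  replace (140 * y ^ 3 * (1 - y) ^ 3) with (140 * (y*(1-y))^3) by ring.
  assert ((y*(1-y))^3 <= (1/4)^3) by (apply pow_incr; lra). lra.
Qed.

Lemma s2_b x : Rabs (s2 x) <= 30.
Proof. apply pw_bound0; [lra|]. intros y Hy. unfold P2.
  assert (0 <= y * (1 - y) <= 1/4) by (pose proof (pow2_ge_0 (y - 1/2)); split; nra).
  replace (420 * y ^ 2 * (1 - y) ^ 2 * (1 - 2 * y)) with (420 * (y*(1-y))^2 * (1 - 2*y)) by ring.
  rewrite Rabs_mult, Rabs_mult. rewrite (Rabs_right 420) by lra.
  rewrite (Rabs_right ((y*(1-y))^2)) by (apply Rle_ge, pow_le; lra).
  assert ((y*(1-y))^2 <= (1/4)^2) by (apply pow_incr; lra).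
  assert (Rabs (1 - 2*y) <= 1) by (apply Rabs_le; lra).
  assert (0 <= (y*(1-y))^2) by (apply pow_le; lra).
  assert (0 <= Rabs (1 - 2 * y)) by apply Rabs_pos.
  nra.
Qed.

Lemma s3_b x : Rabs (s3 x) <= 210.
Proof. apply pw_bound0; [lra|]. intros y Hy. unfold P3.
  assert (0 <= y * (1 - y) <= 1/4) by (pose proof (pow2_ge_0 (y - 1/2)); split; nra).
  replace (840 * y * (1 - y) * (1 - 5 * y + 5 * y ^ 2)) with (840 * (y*(1-y)) * (1 - 5*y + 5*y^2)) by ring.
  rewrite Rabs_mult, Rabs_mult. rewrite (Rabs_right 840) by lra.
  rewrite (Rabs_right (y*(1-y))) by lra.
  assert (Rabs (1 - 5*y + 5*y^2) <= 1) by (apply Rabs_le; nra).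
  assert (0 <= Rabs (1 - 5*y + 5*y^2)) by apply Rabs_pos.
  nra.
Qed.

Lemma s0_range x : 0 <= s0 x <= 1.
Proof.
  unfold s0. destruct (Rle_lt_dec x 0). rewrite pw_lo by lra; lra.
  destruct (Rle_lt_dec 1 x). rewrite pw_hi by lra; lra.
  rewrite pw_mid by lra. unfold P0.
  assert (HQ : forall z, 0 <= z <= 1 -> 0 <= 35 - 84*z + 70*z^2 - 20*z^3).
  { intros z Hz. replace (35 - 84*z + 70*z^2 - 20*z^3) with (1 + (1-z)*(34 - 50*z + 20*z^2)) by ring.
    assert (0 <= 34 - 50*z + 20*z^2) by nra. nra. }
  split.
  - apply Rmult_le_pos. apply pow_le; lra. apply HQ; lra.
  - assert (E : x ^ 4 * (35 - 84 * x + 70 * x ^ 2 - 20 * x ^ 3) = 1 - (1-x)^4 * (35 - 84*(1-x) + 70*(1-x)^2 - 20*(1-x)^3)) by ring.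
    rewrite E. assert (0 <= (1-x)^4 * (35 - 84*(1-x) + 70*(1-x)^2 - 20*(1-x)^3)).
    { apply Rmult_le_pos. apply pow_le; lra. apply HQ; lra. } lra.
Qed.


Definition C1f (h h' : R -> R) := (forall x, is_derive h x (h' x)) /\ (forall x, continuous h' x).

Lemma C1f_cont h h' x : C1f h h' -> continuous h x.
Proof. intros [H _]. apply (ex_derive_continuous h). eexists; apply H. Qed.

Definition sep2 (p1 X1 Y1 p2 X2 Y2 : R -> R) : fn3 :=
  fun x y t => p1 t * X1 x * Y1 y + p2 t * X2 x * Y2 y.

Lemma cont3_x h : (forall x, continuous h x) -> cont3 (fun x y t => h x).
Proof. intros H x y t. simpl.
  apply (continuous_comp (fun p : R*R*R => fst (fst p)) h).
  - apply (continuous_comp (fun p : R*R*R => fst p) fst). apply continuous_fst. apply continuous_fst.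
  - apply H. Qed.
Lemma cont3_y h : (forall x, continuous h x) -> cont3 (fun x y t => h y).
Proof. intros H x y t. simpl.
  apply (continuous_comp (fun p : R*R*R => snd (fst p)) h).
  - apply (continuous_comp (fun p : R*R*R => fst p) snd). apply continuous_fst. apply continuous_snd.
  - apply H. Qed.
Lemma cont3_t h : (forall x, continuous h x) -> cont3 (fun x y t => h t).
Proof. intros H x y t. simpl.
  apply (continuous_comp (fun p : R*R*R => snd p) h).
  - apply continuous_snd.
  - apply H. Qed.
Lemma cont3_mult f g : cont3 f -> cont3 g -> cont3 (fun x y t => f x y t * g x y t).
Proof. intros Hf Hg x y t.
  apply (continuous_mult (fun p : R*R*R => f (fst (fst p)) (snd (fst p)) (snd p)) (fun p : R*R*R => g (fst (fst p)) (snd (fst p)) (snd p))); auto. Qed.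
Lemma cont3_plus f g : cont3 f -> cont3 g -> cont3 (fun x y t => f x y t + g x y t).
Proof. intros Hf Hg x y t.
  apply (continuous_plus (fun p : R*R*R => f (fst (fst p)) (snd (fst p)) (snd p)) (fun p : R*R*R => g (fst (fst p)) (snd (fst p)) (snd p))); auto. Qed.

Lemma cont3_sep2 p1 X1 Y1 p2 X2 Y2 :
  (forall x, continuous p1 x) -> (forall x, continuous X1 x) -> (forall x, continuous Y1 x) ->
  (forall x, continuous p2 x) -> (forall x, continuous X2 x) -> (forall x, continuous Y2 x) ->
  cont3 (sep2 p1 X1 Y1 p2 X2 Y2).
Proof. intros. unfold sep2.
  apply (cont3_plus (fun x y t => p1 t * X1 x * Y1 y) (fun x y t => p2 t * X2 x * Y2 y)).
  - apply (cont3_mult (fun x y t => p1 t * X1 x) (fun x y t => Y1 y)); [|apply cont3_y; auto].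
    apply (cont3_mult (fun x y t => p1 t) (fun x y t => X1 x)); [apply cont3_t|apply cont3_x]; auto.
  - apply (cont3_mult (fun x y t => p2 t * X2 x) (fun x y t => Y2 y)); [|apply cont3_y; auto].
    apply (cont3_mult (fun x y t => p2 t) (fun x y t => X2 x)); [apply cont3_t|apply cont3_x]; auto.
Qed.

Lemma dx_sep2 p1 X1 Y1 p2 X2 Y2 X1' X2' :
  (forall x, is_derive X1 x (X1' x)) -> (forall x, is_derive X2 x (X2' x)) ->
  dx (sep2 p1 X1 Y1 p2 X2 Y2) = sep2 p1 X1' Y1 p2 X2' Y2.
Proof. intros H1 H2. unfold dx, sep2.
  apply functional_extensionality; intro x; apply functional_extensionality; intro y;
  apply functional_extensionality; intro t.
  apply is_derive_unique. auto_derive.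
  - split; [eexists; apply H1|]. split; [eexists; apply H2|]. auto.
  - rewrite (is_derive_unique (fun z : R => X1 z) _ _ (H1 x)), (is_derive_unique (fun z : R => X2 z) _ _ (H2 x)). ring.
Qed.
Lemma dy_sep2 p1 X1 Y1 p2 X2 Y2 Y1' Y2' :
  (forall x, is_derive Y1 x (Y1' x)) -> (forall x, is_derive Y2 x (Y2' x)) ->
  dy (sep2 p1 X1 Y1 p2 X2 Y2) = sep2 p1 X1 Y1' p2 X2 Y2'.
Proof. intros H1 H2. unfold dy, sep2.
  apply functional_extensionality; intro x; apply functional_extensionality; intro y;
  apply functional_extensionality; intro t.
  apply is_derive_unique. auto_derive.
  - split; [eexists; apply H1|]. split; [eexists; apply H2|]. auto.
  - rewrite (is_derive_unique (fun z : R => Y1 z) _ _ (H1 y)), (is_derive_unique (fun z : R => Y2 z) _ _ (H2 y)). ring.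
Qed.
Lemma dt_sep2 p1 X1 Y1 p2 X2 Y2 p1' p2' :
  (forall x, is_derive p1 x (p1' x)) -> (forall x, is_derive p2 x (p2' x)) ->
  dt (sep2 p1 X1 Y1 p2 X2 Y2) = sep2 p1' X1 Y1 p2' X2 Y2.
Proof. intros H1 H2. unfold dt, sep2.
  apply functional_extensionality; intro x; apply functional_extensionality; intro y;
  apply functional_extensionality; intro t.
  apply is_derive_unique. auto_derive.
  - split; [eexists; apply H1|]. split; [eexists; apply H2|]. auto.
  - rewrite (is_derive_unique (fun z : R => p1 z) _ _ (H1 t)), (is_derive_unique (fun z : R => p2 z) _ _ (H2 t)). ring.
Qed.

Lemma C1_3_sep2 p1 X1 Y1 p2 X2 Y2 p1' X1' Y1' p2' X2' Y2' :
  C1f p1 p1' -> C1f X1 X1' -> C1f Y1 Y1' -> C1f p2 p2' -> C1f X2 X2' -> C1f Y2 Y2' ->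
  C1_3 (sep2 p1 X1 Y1 p2 X2 Y2).
Proof.
  intros Hp1 HX1 HY1 Hp2 HX2 HY2.
  pose proof (fun x => C1f_cont _ _ x Hp1) as cp1.
  pose proof (fun x => C1f_cont _ _ x Hp2) as cp2.
  pose proof (fun x => C1f_cont _ _ x HX1) as cX1.
  pose proof (fun x => C1f_cont _ _ x HX2) as cX2.
  pose proof (fun x => C1f_cont _ _ x HY1) as cY1.
  pose proof (fun x => C1f_cont _ _ x HY2) as cY2.
  destruct Hp1 as [Dp1 Cp1], Hp2 as [Dp2 Cp2], HX1 as [DX1 CX1], HX2 as [DX2 CX2],
    HY1 as [DY1 CY1], HY2 as [DY2 CY2].
  split.
  { intros x y t. unfold sep2. split; [|split].
    - auto_derive. split; [eexists; apply DX1|]. split; [eexists; apply DX2|]. exact I.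
    - auto_derive. split; [eexists; apply DY1|]. split; [eexists; apply DY2|]. exact I.
    - auto_derive. split; [eexists; apply Dp1|]. split; [eexists; apply Dp2|]. exact I. }
  split; [apply cont3_sep2; assumption|].
  rewrite (dx_sep2 _ _ _ _ _ _ _ _ DX1 DX2).
  rewrite (dy_sep2 _ _ _ _ _ _ _ _ DY1 DY2).
  rewrite (dt_sep2 _ _ _ _ _ _ _ _ Dp1 Dp2).
  split; [|split]; apply cont3_sep2; assumption.
Qed.

Lemma C1f_const c : C1f (fun _ => c) (fun _ => 0).
Proof. split. intros; apply isd_const. intros; apply continuous_const. Qed.

Lemma C1f_cos w : C1f (fun x => cos (w * x)) (fun x => - w * sin (w * x)).
Proof. split. intros; auto_derive; auto; ring.
  intros. apply (ex_derive_continuous (fun x => - w * sin (w * x))). auto_derive; auto. Qed.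
Lemma C1f_sin w : C1f (fun x => sin (w * x)) (fun x => w * cos (w * x)).
Proof. split. intros; auto_derive; auto; ring.
  intros. apply (ex_derive_continuous (fun x => w * cos (w * x))). auto_derive; auto. Qed.
Lemma C1f_msin w : C1f (fun x => - w * sin (w * x)) (fun x => - w * w * cos (w * x)).
Proof. split. intros; auto_derive; auto; ring.
  intros. apply (ex_derive_continuous (fun x => - w * w * cos (w * x))). auto_derive; auto. Qed.


Record prm := Prm { K1 : R; K2 : R; sa : R; sb : R; t1 : R; c1 : R; c2 : R; T8 : R; L : R }.


Definition dd p := K1 p * sa p - K2 p * sb p.
Definition F0 p t := c1 p * exp (- (K1 p * sa p) * t).
Definition G0 p t := c2 p * exp (- (K2 p * sb p) * t).
Definition tA p t := K1 p * (t - t1 p).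
Definition tC p t := 400 * (t - t1 p) - 1.
Definition tB p t := 200 * (t - t1 p - T8 p) - 1.

Definition ff p t := F0 p t * (1 - s0 (tB p t)).
Definition ff1 p t := - (K1 p * sa p) * F0 p t * (1 - s0 (tB p t)) - F0 p t * (200 * s1 (tB p t)).
Definition ff2 p t := (K1 p * sa p)^2 * F0 p t * (1 - s0 (tB p t))
   + 2 * (K1 p * sa p) * F0 p t * (200 * s1 (tB p t)) - F0 p t * (40000 * s2 (tB p t)).

Definition EE p t := exp (- L p * (1 - s0 (tC p t))).
Definition gg p t := G0 p t * s0 (tA p t) * EE p t.
Definition Gd1 p t := - (K2 p * sb p) * G0 p t.
Definition Gd2 p t := (K2 p * sb p)^2 * G0 p t.
Definition A1 p t := K1 p * s1 (tA p t).
Definition A2 p t := K1 p ^ 2 * s2 (tA p t).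
Definition Ed1 p t := EE p t * (L p * (400 * s1 (tC p t))).
Definition Ed2 p t := EE p t * ((L p * (400 * s1 (tC p t)))^2 + L p * (160000 * s2 (tC p t))).
Definition gg1 p t := Gd1 p t * s0 (tA p t) * EE p t + G0 p t * A1 p t * EE p t + G0 p t * s0 (tA p t) * Ed1 p t.
Definition gg2 p t := Gd2 p t * s0 (tA p t) * EE p t + G0 p t * A2 p t * EE p t + G0 p t * s0 (tA p t) * Ed2 p t
  + 2 * (Gd1 p t * A1 p t * EE p t + Gd1 p t * s0 (tA p t) * Ed1 p t + G0 p t * A1 p t * Ed1 p t).

Ltac rwD := repeat first
  [ rewrite (is_derive_unique (fun z : R => s0 z) _ _ (s0_d _))
  | rewrite (is_derive_unique (fun z : R => s1 z) _ _ (s1_d _))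
  | rewrite (is_derive_unique (fun z : R => s2 z) _ _ (s2_d _)) ].
Ltac exD := repeat (first [ match goal with |- _ /\ _ => split end | exact I
  | match goal with
    | |- ex_derive (fun x => s0 x) _ => eexists; apply s0_d
    | |- ex_derive (fun x => s1 x) _ => eexists; apply s1_d
    | |- ex_derive (fun x => s2 x) _ => eexists; apply s2_d end ]).

Lemma ff_d p t : is_derive (ff p) t (ff1 p t).
Proof. unfold ff, ff1, F0, tB. auto_derive. exD. rwD. unfold Rminus. ring. Qed.

Lemma ff1_d p t : is_derive (ff1 p) t (ff2 p t).
Proof. unfold ff1, ff2, F0, tB. auto_derive. exD. rwD. unfold Rminus. ring. Qed.
Lemma gg_d p t : is_derive (gg p) t (gg1 p t).
Proof. unfold gg, gg1, Gd1, A1, Ed1, EE, G0, tA, tC. auto_derive. exD. rwD. unfold Rminus. ring. Qed.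
Lemma gg1_d p t : is_derive (gg1 p) t (gg2 p t).
Proof. unfold gg1, gg2, Gd1, Gd2, A1, A2, Ed1, Ed2, EE, G0, tA, tC. auto_derive. exD. rwD. unfold Rminus. ring. Qed.
Lemma ff2_ex p t : ex_derive (ff2 p) t.
Proof. unfold ff2, F0, tB. auto_derive. exD. Qed.
Lemma gg2_ex p t : ex_derive (gg2 p) t.
Proof. unfold gg2, Gd1, Gd2, A1, A2, Ed1, Ed2, EE, G0, tA, tC. auto_derive. exD. Qed.

Definition mu p t := 2 * exp (- L p) / (K1 p * K2 p) * exp (dd p * (t - t1 p))
   * (K1 p ^ 2 * s2 (tA p t) - 2 * K1 p * K2 p * sb p * s1 (tA p t)).
Definition mu1 p t := 2 * exp (- L p) / (K1 p * K2 p) *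
   (dd p * exp (dd p * (t - t1 p)) * (K1 p ^ 2 * s2 (tA p t) - 2 * K1 p * K2 p * sb p * s1 (tA p t))
    + exp (dd p * (t - t1 p)) * (K1 p ^ 3 * s3 (tA p t) - 2 * K1 p ^ 2 * K2 p * sb p * s2 (tA p t))).
Definition lam p t := 2 / (K1 p * K2 p) * exp (- dd p * (t - t1 p))
   * (2 * K1 p * sa p * (200 * s1 (tB p t)) - 40000 * s2 (tB p t)).
Definition lam1 p t := 2 / (K1 p * K2 p) *
   (- dd p * exp (- dd p * (t - t1 p)) * (2 * K1 p * sa p * (200 * s1 (tB p t)) - 40000 * s2 (tB p t))
    + exp (- dd p * (t - t1 p)) * (2 * K1 p * sa p * (40000 * s2 (tB p t)) - 8000000 * s3 (tB p t))).
Definition bet p t := (- 2 * K2 p * sb p * L p * (400 * s1 (tC p t)) + (L p * (400 * s1 (tC p t)))^2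
   + L p * (160000 * s2 (tC p t))) / K2 p ^ 2.
Definition bet1 p t := (- 2 * K2 p * sb p * L p * (160000 * s2 (tC p t))
   + 2 * (L p * (400 * s1 (tC p t))) * (L p * (160000 * s2 (tC p t)))
   + L p * (64000000 * s3 (tC p t))) / K2 p ^ 2.

Ltac rwD3 := repeat first
  [ rewrite (is_derive_unique (fun z : R => s0 z) _ _ (s0_d _))
  | rewrite (is_derive_unique (fun z : R => s1 z) _ _ (s1_d _))
  | rewrite (is_derive_unique (fun z : R => s2 z) _ _ (s2_d _)) ].

Lemma mu_d p t : is_derive (mu p) t (mu1 p t).
Proof. unfold mu, mu1, tA. auto_derive. exD. rwD. unfold Rminus. ring. Qed.
Lemma lam_d p t : is_derive (lam p) t (lam1 p t).
Proof. unfold lam, lam1, tB. auto_derive. exD. rwD. unfold Rminus. ring. Qed.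
Lemma bet_d p t : is_derive (bet p) t (bet1 p t).
Proof. unfold bet, bet1, tC. auto_derive. exD. rwD. unfold Rminus. replace (K2 p * (K2 p * 1)) with (K2 p ^ 2) by ring. unfold Rdiv. ring. Qed.

Lemma cont_s3 (a b h : R -> R) t :
  (forall t, ex_derive a t) -> (forall t, ex_derive b t) -> (forall t, ex_derive h t) ->
  continuous (fun t => a t + b t * s3 (h t)) t.
Proof.
  intros Ha Hb Hh.
  apply (continuous_plus a (fun t => b t * s3 (h t))).
  apply (ex_derive_continuous a); auto.
  apply (continuous_mult b (fun t => s3 (h t))).
  apply (ex_derive_continuous b); auto.
  apply (continuous_comp h s3). apply (ex_derive_continuous h); auto. apply s3_c.
Qed.

Lemma mu1_c p t : continuous (mu1 p) t.
Proof.
  apply (continuous_ext (fun t => (2 * exp (- L p) / (K1 p * K2 p) *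
   (dd p * exp (dd p * (t - t1 p)) * (K1 p ^ 2 * s2 (tA p t) - 2 * K1 p * K2 p * sb p * s1 (tA p t))
    + exp (dd p * (t - t1 p)) * (- 2 * K1 p ^ 2 * K2 p * sb p * s2 (tA p t))))
    + (2 * exp (- L p) / (K1 p * K2 p) * exp (dd p * (t - t1 p)) * K1 p ^ 3) * s3 (tA p t))).
  { intros x; simpl; unfold mu1; ring. }
  apply (cont_s3 (fun t => (2 * exp (- L p) / (K1 p * K2 p) *
   (dd p * exp (dd p * (t - t1 p)) * (K1 p ^ 2 * s2 (tA p t) - 2 * K1 p * K2 p * sb p * s1 (tA p t))
    + exp (dd p * (t - t1 p)) * (- 2 * K1 p ^ 2 * K2 p * sb p * s2 (tA p t)))))
    (fun t => 2 * exp (- L p) / (K1 p * K2 p) * exp (dd p * (t - t1 p)) * K1 p ^ 3) (tA p));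
  intros; unfold tA; auto_derive; exD.
Qed.

Lemma lam1_c p t : continuous (lam1 p) t.
Proof.
  apply (continuous_ext (fun t => (2 / (K1 p * K2 p) *
   (- dd p * exp (- dd p * (t - t1 p)) * (2 * K1 p * sa p * (200 * s1 (tB p t)) - 40000 * s2 (tB p t))
    + exp (- dd p * (t - t1 p)) * (2 * K1 p * sa p * (40000 * s2 (tB p t)))))
    + (2 / (K1 p * K2 p) * exp (- dd p * (t - t1 p)) * (- 8000000)) * s3 (tB p t))).
  { intros x; simpl; unfold lam1; ring. }
  apply (cont_s3 (fun t => (2 / (K1 p * K2 p) *
   (- dd p * exp (- dd p * (t - t1 p)) * (2 * K1 p * sa p * (200 * s1 (tB p t)) - 40000 * s2 (tB p t))
    + exp (- dd p * (t - t1 p)) * (2 * K1 p * sa p * (40000 * s2 (tB p t))))))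
    (fun t => 2 / (K1 p * K2 p) * exp (- dd p * (t - t1 p)) * (- 8000000)) (tB p));
  intros; unfold tB; auto_derive; exD.
Qed.

Lemma bet1_c p t : continuous (bet1 p) t.
Proof.
  apply (continuous_ext (fun t => ((- 2 * K2 p * sb p * L p * (160000 * s2 (tC p t))
   + 2 * (L p * (400 * s1 (tC p t))) * (L p * (160000 * s2 (tC p t)))) / K2 p ^ 2)
   + (L p * 64000000 / K2 p ^ 2) * s3 (tC p t))).
  { intros x; unfold bet1, Rdiv; simpl; ring. }
  apply (cont_s3 (fun t => ((- 2 * K2 p * sb p * L p * (160000 * s2 (tC p t))
   + 2 * (L p * (400 * s1 (tC p t))) * (L p * (160000 * s2 (tC p t)))) / K2 p ^ 2))
   (fun t => L p * 64000000 / K2 p ^ 2) (tC p));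
  intros; unfold tC; auto_derive; exD.
Qed.

Definition good (p : prm) : Prop :=
  10000000000000000000000000 <= K1 p /\ K1 p < K2 p /\ K2 p <= 2 * K1 p /\
  0 < sa p /\ 1/10 < sa p * sa p < 10 /\ 0 < sb p /\ 1/10 < sb p * sb p < 10 /\
  0 < dd p /\ 0 < c1 p /\ 0 < c2 p /\
  c1 p * exp (- (K1 p * sa p) * t1 p) = c2 p * exp (- (K2 p * sb p) * t1 p) /\
  T8 p = 8 * ln (K1 p) / dd p /\ L p = K1 p / 1000000000.

Ltac gd H := destruct H as (HK1 & HK12 & HK21 & Hsa & Ha & Hsb & Hb & Hd & Hc1 & Hc2 & Hc & HT8 & HL).

Lemma FG p t : good p -> G0 p t * exp (- dd p * (t - t1 p)) = F0 p t.
Proof.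
  intros H; gd H. unfold G0, F0.
  assert (Hc2' : c2 p = c1 p * exp (- (K1 p * sa p) * t1 p) * exp ((K2 p * sb p) * t1 p)).
  { rewrite Hc. rewrite Rmult_assoc, <- exp_plus. replace (- (K2 p * sb p) * t1 p + K2 p * sb p * t1 p) with 0 by ring.
    rewrite exp_0; ring. }
  rewrite Hc2'. rewrite !Rmult_assoc. f_equal. rewrite <- !exp_plus. f_equal. unfold dd. ring.
Qed.

Lemma basic p : good p ->
  400 <= K1 p /\ 0 < K1 p /\ 0 < K2 p /\ 0 <= T8 p /\ 0 <= L p.
Proof.
  intros H; pose proof H as H'; gd H.
  assert (400 <= K1 p) by lra.
  repeat split; try lra.
  - rewrite HT8. unfold Rdiv. apply Rmult_le_pos; [|left; apply Rinv_0_lt_compat; auto].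
    apply Rmult_le_pos; [lra|]. rewrite <- ln_1. apply ln_le; lra.
  all: try (rewrite HL; lra).
Qed.

Lemma suppA p t : good p -> tA p t < 1 -> tC p t < 0 /\ tB p t < 0.
Proof.
  intros H HA. pose proof (basic p H) as (H400 & HK1p & HK2p & HT & HLp).
  unfold tA, tC, tB in *.
  assert (t - t1 p < / K1 p).
  { apply (Rmult_lt_reg_l (K1 p)); [lra|]. rewrite Rinv_r by lra. lra. }
  assert (/ K1 p <= /400) by (apply Rinv_le_contravar; lra).
  split; lra.
Qed.

Lemma suppB p t : good p -> 0 < tB p t -> 1 <= tA p t /\ 1 <= tC p t.
Proof.
  intros H HB. pose proof (basic p H) as (H400 & HK1p & HK2p & HT & HLp).
  unfold tA, tC, tB in *.
  assert (t - t1 p > 1/200) by lra.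
  split; [|lra]. nra.
Qed.

Lemma ode_f p t : good p ->
  ff2 p t = sa p * sa p * K1 p ^ 2 * ff p t + K1 p * K2 p / 2 * lam p t * gg p t.
Proof.
  intros H. pose proof (basic p H) as (H400 & HK1p & HK2p & HT & HLp).
  destruct (Rle_lt_dec (tB p t) 0) as [HB|HB].
  - unfold ff2, ff, lam. rewrite s1_out, s2_out by auto. ring.
  - destruct (suppB p t H HB) as [HA HC].
    unfold gg, EE. rewrite (s0_hi (tA p t)), (s0_hi (tC p t)) by auto.
    replace (- L p * (1 - 1)) with 0 by ring. rewrite exp_0.
    unfold ff2, ff, lam. rewrite <- (FG p t H). field. lra.
Qed.

Lemma ode_g p t : good p ->
  gg2 p t = (sb p * sb p + bet p t) * K2 p ^ 2 * gg p t + K1 p * K2 p / 2 * mu p t * ff p t.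
Proof.
  intros H. pose proof (basic p H) as (H400 & HK1p & HK2p & HT & HLp).
  destruct (Rle_lt_dec 1 (tA p t)) as [HA|HA].
  - unfold gg2, gg, mu, A1, A2. rewrite (s0_hi (tA p t)) by auto. rewrite s1_out, s2_out by auto.
    unfold Ed1, Ed2, bet, Gd1, Gd2. field. lra.
  - destruct (suppA p t H HA) as [HC HB].
    assert (EEv : EE p t = exp (- L p)).
    { unfold EE. rewrite s0_lo by lra. f_equal; ring. }
    assert (Hbet : bet p t = 0).
    { unfold bet. rewrite s1_out, s2_out by lra. field. lra. }
    assert (Hff : ff p t = F0 p t). { unfold ff. rewrite s0_lo by lra. ring. }
    unfold gg2, gg. rewrite Hbet, Hff. unfold Ed1, Ed2. rewrite s1_out, s2_out by lra.
    rewrite EEv. unfold mu, Gd1, Gd2, A1, A2. rewrite <- (FG p t H).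
    replace (exp (dd p * (t - t1 p))) with (/ exp (- dd p * (t - t1 p)))
      by (rewrite <- exp_Ropp; f_equal; ring).
    field. repeat split; try lra; apply Rgt_not_eq, exp_pos.
Qed.


Definition uu p : fn3 := sep2 (ff p) (fun x => cos (K1 p * x)) (fun _ => 1) (gg p) (fun _ => 1) (fun y => cos (K2 p * y)).

Definition AA p : matfn := fun x y t =>
  Mat2 (sa p * sa p + K2 p / (2 * K1 p) * mu p t * cos (K1 p * x) * cos (K2 p * y))
       (lam p t * sin (K1 p * x) * sin (K2 p * y))
       (mu p t * sin (K1 p * x) * sin (K2 p * y))
       (sb p * sb p + bet p t + K1 p / (2 * K2 p) * lam p t * cos (K1 p * x) * cos (K2 p * y)).

Lemma wave0 p x y t : good p -> wave_op (AA p) (uu p) x y t = 0.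
Proof.
  intros H.
  unfold wave_op.
  assert (Hdx : dx (uu p) = sep2 (ff p) (fun x => - K1 p * sin (K1 p * x)) (fun _ => 1) (gg p) (fun _ => 0) (fun y => cos (K2 p * y))).
  { apply dx_sep2. apply C1f_cos. intros; apply isd_const. }
  assert (Hdy : dy (uu p) = sep2 (ff p) (fun x => cos (K1 p * x)) (fun _ => 0) (gg p) (fun _ => 1) (fun y => - K2 p * sin (K2 p * y))).
  { apply dy_sep2. intros; apply isd_const. apply C1f_cos. }
  assert (Hdt : dt (uu p) = sep2 (ff1 p) (fun x => cos (K1 p * x)) (fun _ => 1) (gg1 p) (fun _ => 1) (fun y => cos (K2 p * y))).
  { apply dt_sep2. apply ff_d. apply gg_d. }
  assert (Hdtt : dt (dt (uu p)) = sep2 (ff2 p) (fun x => cos (K1 p * x)) (fun _ => 1) (gg2 p) (fun _ => 1) (fun y => cos (K2 p * y))).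
  { rewrite Hdt. apply dt_sep2. apply ff1_d. apply gg1_d. }
  rewrite Hdx, Hdy, Hdtt. unfold dx, dy, sep2, e11, e12, e21, e22, AA; simpl.
  match goal with |- context [Derive ?f x] => erewrite (is_derive_unique f x); [| auto_derive; [exact I|reflexivity]] end.
  match goal with |- context [Derive ?f y] => erewrite (is_derive_unique f y); [| auto_derive; [exact I|reflexivity]] end.
  rewrite (ode_f p t H), (ode_g p t H).
  pose proof (basic p H) as (_ & HK1 & HK2 & _).
  transitivity (K1 p * K2 p / 2 * mu p t * ff p t * cos (K2 p * y) * (1 - (sin (K1 p * x)^2 + cos (K1 p * x)^2))
     + K1 p * K2 p / 2 * lam p t * gg p t * cos (K1 p * x) * (1 - (sin (K2 p * y)^2 + cos (K2 p * y)^2))).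
  { field. lra. }
  rewrite <- !Rsqr_pow2, !sin2_cos2. ring.
Qed.

Lemma C1f_ff p : C1f (ff p) (ff1 p).
Proof. split. apply ff_d. intros; apply (ex_derive_continuous (ff1 p)); eexists; apply ff1_d. Qed.
Lemma C1f_ff1 p : C1f (ff1 p) (ff2 p).
Proof. split. apply ff1_d. intros; apply (ex_derive_continuous (ff2 p)); apply ff2_ex. Qed.
Lemma C1f_gg p : C1f (gg p) (gg1 p).
Proof. split. apply gg_d. intros; apply (ex_derive_continuous (gg1 p)); eexists; apply gg1_d. Qed.
Lemma C1f_gg1 p : C1f (gg1 p) (gg2 p).
Proof. split. apply gg1_d. intros; apply (ex_derive_continuous (gg2 p)); apply gg2_ex. Qed.
Lemma C1f_mu p : C1f (mu p) (mu1 p).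
Proof. split. apply mu_d. apply mu1_c. Qed.
Lemma C1f_lam p : C1f (lam p) (lam1 p).
Proof. split. apply lam_d. apply lam1_c. Qed.
Lemma C1f_scal c h h' : C1f h h' -> C1f (fun t => c * h t) (fun t => c * h' t).
Proof. intros [D C]. split.
  - intros x. apply (is_derive_scal h x c (h' x)). apply D.
  - intros x. apply (continuous_mult (fun _ => c) h'). apply continuous_const. apply C. Qed.
Lemma C1f_cplus c h h' : C1f h h' -> C1f (fun t => c + h t) h'.
Proof. intros [D C]. split; auto.
  intros x. pose proof (is_derive_plus (fun _ => c) h x 0 (h' x) (isd_const c x) (D x)) as K.
  replace (h' x) with (plus 0 (h' x)) by (unfold plus; simpl; ring). exact K. Qed.

Lemma uu_C2 p : C2_3 (uu p).
Proof.
  assert (Hc : C1f (fun _ : R => 1) (fun _ => 0)) by apply C1f_const.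
  assert (Hz : C1f (fun _ : R => 0) (fun _ => 0)) by apply C1f_const.
  split; [|split; [|split]].
  - unfold uu. exact (C1_3_sep2 _ _ _ _ _ _ _ _ _ _ _ _ (C1f_ff p) (C1f_cos (K1 p)) Hc (C1f_gg p) Hc (C1f_cos (K2 p))).
  - unfold uu. rewrite (dx_sep2 _ _ _ _ _ _ (fun x => - K1 p * sin (K1 p * x)) (fun _ => 0) (proj1 (C1f_cos (K1 p))) (proj1 Hc)).
    exact (C1_3_sep2 _ _ _ _ _ _ _ _ _ _ _ _ (C1f_ff p) (C1f_msin (K1 p)) Hc (C1f_gg p) Hz (C1f_cos (K2 p))).
  - unfold uu. rewrite (dy_sep2 _ _ _ _ _ _ (fun _ => 0) (fun y => - K2 p * sin (K2 p * y)) (proj1 Hc) (proj1 (C1f_cos (K2 p)))).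
    exact (C1_3_sep2 _ _ _ _ _ _ _ _ _ _ _ _ (C1f_ff p) (C1f_cos (K1 p)) Hz (C1f_gg p) Hc (C1f_msin (K2 p))).
  - unfold uu. rewrite (dt_sep2 _ _ _ _ _ _ (ff1 p) (gg1 p) (ff_d p) (gg_d p)).
    exact (C1_3_sep2 _ _ _ _ _ _ _ _ _ _ _ _ (C1f_ff1 p) (C1f_cos (K1 p)) Hc (C1f_gg1 p) Hc (C1f_cos (K2 p))).
Qed.

Lemma e11_eq p : e11 (AA p) = sep2 (fun _ => sa p * sa p) (fun _ => 1) (fun _ => 1)
   (fun t => K2 p / (2 * K1 p) * mu p t) (fun x => cos (K1 p * x)) (fun y => cos (K2 p * y)).
Proof. unfold e11, AA, sep2; simpl. repeat (apply functional_extensionality; intro). ring. Qed.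
Lemma e12_eq p : e12 (AA p) = sep2 (lam p) (fun x => sin (K1 p * x)) (fun y => sin (K2 p * y))
   (fun _ => 0) (fun _ => 1) (fun _ => 1).
Proof. unfold e12, AA, sep2; simpl. repeat (apply functional_extensionality; intro). ring. Qed.
Lemma e21_eq p : e21 (AA p) = sep2 (mu p) (fun x => sin (K1 p * x)) (fun y => sin (K2 p * y))
   (fun _ => 0) (fun _ => 1) (fun _ => 1).
Proof. unfold e21, AA, sep2; simpl. repeat (apply functional_extensionality; intro). ring. Qed.
Lemma e22_eq p : e22 (AA p) = sep2 (fun t => sb p * sb p + bet p t) (fun _ => 1) (fun _ => 1)
   (fun t => K1 p / (2 * K2 p) * lam p t) (fun x => cos (K1 p * x)) (fun y => cos (K2 p * y)).
Proof. unfold e22, AA, sep2; simpl. repeat (apply functional_extensionality; intro). ring. Qed.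

Lemma C1f_bet p : C1f (bet p) (bet1 p).
Proof. split. apply bet_d. apply bet1_c. Qed.

Lemma AA_C1 p : matfn_C1 (AA p).
Proof.
  assert (Hc : C1f (fun _ : R => 1) (fun _ => 0)) by apply C1f_const.
  split; [|split; [|split]].
  - rewrite e11_eq. exact (C1_3_sep2 _ _ _ _ _ _ _ _ _ _ _ _ (C1f_const _) Hc Hc
       (C1f_scal _ _ _ (C1f_mu p)) (C1f_cos (K1 p)) (C1f_cos (K2 p))).
  - rewrite e12_eq. exact (C1_3_sep2 _ _ _ _ _ _ _ _ _ _ _ _ (C1f_lam p) (C1f_sin _) (C1f_sin _)
       (C1f_const _) Hc Hc).
  - rewrite e21_eq. exact (C1_3_sep2 _ _ _ _ _ _ _ _ _ _ _ _ (C1f_mu p) (C1f_sin _) (C1f_sin _)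
       (C1f_const _) Hc Hc).
  - rewrite e22_eq. exact (C1_3_sep2 _ _ _ _ _ _ _ _ _ _ _ _ (C1f_cplus _ _ _ (C1f_bet p)) Hc Hc
       (C1f_scal _ _ _ (C1f_lam p)) (C1f_cos (K1 p)) (C1f_cos (K2 p))).
Qed.

Definition intK (w : R) := exists n : nat, w = INR n.

Lemma per_cos w x : intK w -> cos (w * (x + 2 * PI)) = cos (w * x).
Proof. intros [n ->]. replace (INR n * (x + 2 * PI)) with (INR n * x + 2 * INR n * PI) by ring.
  apply cos_period. Qed.
Lemma per_sin w x : intK w -> sin (w * (x + 2 * PI)) = sin (w * x).
Proof. intros [n ->]. replace (INR n * (x + 2 * PI)) with (INR n * x + 2 * INR n * PI) by ring.
  apply sin_period. Qed.

Lemma uu_per p : intK (K1 p) -> intK (K2 p) -> periodic_T2 (uu p).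
Proof. intros H1 H2 x y t. unfold uu, sep2. rewrite per_cos, per_cos by auto. split; reflexivity. Qed.

Lemma AA_per p : intK (K1 p) -> intK (K2 p) -> matfn_periodic (AA p).
Proof. intros H1 H2. unfold matfn_periodic, periodic_T2, e11, e12, e21, e22, AA; simpl.
  repeat split; rewrite ?per_cos, ?per_sin by auto; reflexivity. Qed.


Ltac pos := apply Rle_ge; repeat (apply Rmult_le_pos || apply pow_le); lra.

Lemma exp_sq x : 0 <= x -> x * x / 2 <= exp x.
Proof. intros Hx. pose proof (exp_ge_taylor x 2 Hx) as H. simpl in H.
  unfold Rdiv in *. simpl in H. nra. Qed.

Lemma exp4 : exp 4 <= 81.
Proof. replace 4 with (1 + 1 + 1 + 1) by ring. rewrite !exp_plus.
  pose proof exp_le_3. pose proof (exp_pos 1).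
  assert (exp 1 * exp 1 <= 9) by nra. assert (exp 1 * exp 1 * exp 1 <= 27) by nra. nra. Qed.

Lemma consts p : good p ->
  sa p < 4 /\ sb p < 4 /\ dd p <= 4 * K1 p /\ 0 < exp (- L p) /\ exp (- L p) * (1000000 * K1 p) <= 1
  /\ L p * 1000000000 <= K2 p.
Proof.
  intros H. pose proof (basic p H) as (H400 & HK1p & HK2p & HT & HLp). pose proof H as H'. gd H.
  assert (sa p < 4) by nra. assert (sb p < 4) by nra.
  assert (dd p <= 4 * K1 p) by (unfold dd; nra).
  split; [lra|]; split; [lra|]; split; [lra|]; split; [apply exp_pos|]; split.
  - rewrite exp_Ropp. pose proof (exp_pos (L p)).
    assert (1000000 * K1 p <= exp (L p)).
    { eapply Rle_trans; [|apply exp_sq; lra]. rewrite HL. nra. }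
    apply (Rmult_le_reg_l (exp (L p))); [lra|]. field_simplify; [lra|lra].
  - rewrite HL. lra.
Qed.

Lemma ab2 a b x y A B : Rabs x <= A -> Rabs y <= B -> Rabs (a*x + b*y) <= Rabs a * A + Rabs b * B.
Proof. intros. eapply Rle_trans; [apply Rabs_triang|]. rewrite !Rabs_mult.
  apply Rplus_le_compat; apply Rmult_le_compat_l; auto; apply Rabs_pos. Qed.

Lemma mu_bnd p t : good p -> K2 p * Rabs (mu p t) <= 1 /\ Rabs (mu1 p t) <= 1.
Proof.
  intros H. pose proof (basic p H) as (H400 & HK1p & HK2p & HT & HLp).
  pose proof (consts p H) as (Hsa4 & Hsb4 & Hd4 & He & He1 & HLK).
  pose proof H as H'. gd H'.
  destruct (Rle_lt_dec (tA p t) 0) as [HA|HA].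
  { unfold mu, mu1. rewrite s1_out, s2_out, s3_out by auto. split; rewrite Rabs_right by (right; ring); nra. }
  destruct (Rle_lt_dec 1 (tA p t)) as [HA'|HA'].
  { unfold mu, mu1. rewrite s1_out, s2_out, s3_out by auto. split; rewrite Rabs_right by (right; ring); nra. }
  set (e := exp (- L p)) in *. set (X := exp (dd p * (t - t1 p))).
  assert (HX : 0 < X <= 81).
  { split. apply exp_pos. eapply Rle_trans; [|apply exp4]. unfold X.
    destruct (Rle_lt_dec (dd p * (t - t1 p)) 4). apply exp_le_3 || (destruct r; [left; apply exp_increasing; auto|right; f_equal; auto]).
    exfalso. unfold tA in *. nra. }
  pose proof (s1_b (tA p t)). pose proof (s2_b (tA p t)). pose proof (s3_b (tA p t)).
  set (W := K1 p ^ 2 * s2 (tA p t) - 2 * K1 p * K2 p * sb p * s1 (tA p t)).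
  set (W2 := K1 p ^ 3 * s3 (tA p t) - 2 * K1 p ^ 2 * K2 p * sb p * s2 (tA p t)).
  assert (HW : Rabs W <= 78 * K1 p ^ 2).
  { unfold W. replace (K1 p ^ 2 * s2 (tA p t) - 2 * K1 p * K2 p * sb p * s1 (tA p t)) with
      (K1 p ^ 2 * s2 (tA p t) + (- (2 * K1 p * K2 p * sb p)) * s1 (tA p t)) by ring.
    eapply Rle_trans; [apply ab2; eauto|]. rewrite Rabs_Ropp, (Rabs_right (K1 p ^ 2)), (Rabs_right (2 * K1 p * K2 p * sb p)) by pos.
    assert (K2 p * sb p <= 8 * K1 p) by nra.
    assert (K1 p * (K2 p * sb p) <= K1 p * (8 * K1 p)) by (apply Rmult_le_compat_l; lra). nra. }
  assert (HW2 : Rabs W2 <= 690 * K1 p ^ 3).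
  { unfold W2. replace (K1 p ^ 3 * s3 (tA p t) - 2 * K1 p ^ 2 * K2 p * sb p * s2 (tA p t)) with
      (K1 p ^ 3 * s3 (tA p t) + (- (2 * K1 p ^ 2 * K2 p * sb p)) * s2 (tA p t)) by ring.
    eapply Rle_trans; [apply ab2; eauto|]. rewrite Rabs_Ropp, (Rabs_right (K1 p ^ 3)), (Rabs_right (2 * K1 p ^ 2 * K2 p * sb p)) by pos.
    assert (K1 p ^ 2 * K2 p * sb p <= K1 p ^ 2 * (2 * K1 p) * 4).
    { apply Rmult_le_compat; try nra; apply Rmult_le_compat_l; nra. } nra. }
  pose proof (Rabs_pos W). pose proof (Rabs_pos W2).
  assert (Hmu : mu p t = 2 * e / (K1 p * K2 p) * X * W) by reflexivity.
  assert (Hmu1 : mu1 p t = 2 * e / (K1 p * K2 p) * (dd p * X * W + X * W2)) by reflexivity.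
  split.
  - rewrite Hmu. rewrite !Rabs_mult. rewrite (Rabs_right X) by lra.
    rewrite (Rabs_right (2 * e / (K1 p * K2 p))) by (apply Rle_ge; unfold Rdiv; apply Rmult_le_pos; [lra|left; apply Rinv_0_lt_compat; nra]).
    replace (K2 p * (2 * e / (K1 p * K2 p) * X * Rabs W)) with (2 * e * (X * Rabs W) / K1 p) by (field; lra).
    apply (Rmult_le_reg_r (K1 p)); [lra|]. unfold Rdiv. rewrite Rmult_assoc, Rinv_l by lra.
    assert (X * Rabs W <= 81 * (78 * K1 p ^ 2)) by (apply Rmult_le_compat; lra).
    assert (e * (X * Rabs W) <= e * (81 * (78 * K1 p ^ 2))) by (apply Rmult_le_compat_l; lra).
    nra.
  - rewrite Hmu1. rewrite Rabs_mult.
    rewrite (Rabs_right (2 * e / (K1 p * K2 p))) by (apply Rle_ge; unfold Rdiv; apply Rmult_le_pos; [lra|left; apply Rinv_0_lt_compat; nra]).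
    assert (Rabs (dd p * X * W + X * W2) <= X * (4 * K1 p * (78 * K1 p ^ 2) + 690 * K1 p ^ 3)).
    { eapply Rle_trans; [apply Rabs_triang|]. rewrite !Rabs_mult. rewrite (Rabs_right X), (Rabs_right (dd p)) by lra.
      assert (dd p * Rabs W <= 4 * K1 p * (78 * K1 p ^ 2)) by (apply Rmult_le_compat; lra).
      nra. }
    assert (Rabs (dd p * X * W + X * W2) <= 81 * (1002 * K1 p ^ 3)).
    { eapply Rle_trans; [eauto|]. apply Rmult_le_compat; nra. }
    replace (2 * e / (K1 p * K2 p) * Rabs (dd p * X * W + X * W2)) with
      (2 * e * Rabs (dd p * X * W + X * W2) / (K1 p * K2 p)) by (field; lra).
    apply (Rmult_le_reg_r (K1 p * K2 p)); [nra|]. unfold Rdiv. rewrite Rmult_assoc, Rinv_l by nra.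
    assert (e * Rabs (dd p * X * W + X * W2) <= e * (81 * (1002 * K1 p ^ 3))) by (apply Rmult_le_compat_l; lra).
    assert (K1 p ^ 3 <= K1 p ^ 2 * K2 p) by (simpl; nra).
    nra.
Qed.

Lemma exp_mono x y : x <= y -> exp x <= exp y.
Proof. intros [H|H]. left; apply exp_increasing; auto. subst; lra. Qed.

Lemma lam_bnd p t : good p -> K2 p * Rabs (lam p t) <= 1 /\ Rabs (lam1 p t) <= 1.
Proof.
  intros H. pose proof (basic p H) as (H400 & HK1p & HK2p & HT & HLp).
  pose proof (consts p H) as (Hsa4 & Hsb4 & Hd4 & He & He1 & HLK).
  pose proof H as H'. gd H'.
  destruct (Rle_lt_dec (tB p t) 0) as [HB|HB].
  { unfold lam, lam1. rewrite s1_out, s2_out, s3_out by auto. split; rewrite Rabs_right by (right; ring); nra. }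
  destruct (Rle_lt_dec 1 (tB p t)) as [HB'|HB'].
  { unfold lam, lam1. rewrite s1_out, s2_out, s3_out by auto. split; rewrite Rabs_right by (right; ring); nra. }
  set (Y := exp (- dd p * (t - t1 p))).
  assert (HY : 0 < Y /\ Y * K1 p <= 1).
  { split. apply exp_pos.
    assert (Hln : 0 <= ln (K1 p)) by (rewrite <- ln_1; apply ln_le; lra).
    assert (dd p * T8 p = 8 * ln (K1 p)) by (rewrite HT8; field; lra).
    assert (t - t1 p >= T8 p) by (unfold tB in HB; lra).
    assert (ln (K1 p) <= dd p * (t - t1 p)) by nra.
    assert (HY1 : Y <= exp (- ln (K1 p))) by (unfold Y; apply exp_mono; lra).
    rewrite exp_Ropp, exp_ln in HY1 by lra.
    apply (Rmult_le_compat_r (K1 p)) in HY1; [|lra]. rewrite Rinv_l in HY1 by lra. lra. }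
  pose proof (s1_b (tB p t)). pose proof (s2_b (tB p t)). pose proof (s3_b (tB p t)).
  set (W := 2 * K1 p * sa p * (200 * s1 (tB p t)) - 40000 * s2 (tB p t)).
  set (W2 := 2 * K1 p * sa p * (40000 * s2 (tB p t)) - 8000000 * s3 (tB p t)).
  assert (HW : Rabs W <= 4801 * K1 p).
  { unfold W. replace (2 * K1 p * sa p * (200 * s1 (tB p t)) - 40000 * s2 (tB p t)) with
      ((400 * K1 p * sa p) * s1 (tB p t) + (-40000) * s2 (tB p t)) by ring.
    eapply Rle_trans; [apply ab2; eauto|]. rewrite (Rabs_right (400 * K1 p * sa p)) by pos.
    rewrite Rabs_left by lra. nra. }
  assert (HW2 : Rabs W2 <= 9700000 * K1 p).
  { unfold W2. replace (2 * K1 p * sa p * (40000 * s2 (tB p t)) - 8000000 * s3 (tB p t)) with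
      ((80000 * K1 p * sa p) * s2 (tB p t) + (-8000000) * s3 (tB p t)) by ring.
    eapply Rle_trans; [apply ab2; eauto|]. rewrite (Rabs_right (80000 * K1 p * sa p)) by pos.
    rewrite Rabs_left by lra. nra. }
  pose proof (Rabs_pos W). pose proof (Rabs_pos W2).
  assert (Hl : lam p t = 2 / (K1 p * K2 p) * Y * W) by reflexivity.
  assert (Hl1 : lam1 p t = 2 / (K1 p * K2 p) * (- dd p * Y * W + Y * W2)) by reflexivity.
  assert (Hcc : Rabs (2 / (K1 p * K2 p)) = 2 / (K1 p * K2 p)).
  { apply Rabs_right. apply Rle_ge; unfold Rdiv; apply Rmult_le_pos; [lra|left; apply Rinv_0_lt_compat; nra]. }
  split.
  - rewrite Hl, !Rabs_mult, Hcc, (Rabs_right Y) by lra.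
    replace (K2 p * (2 / (K1 p * K2 p) * Y * Rabs W)) with (2 * (Y * Rabs W) / K1 p) by (field; lra).
    apply (Rmult_le_reg_r (K1 p)); [lra|]. unfold Rdiv. rewrite Rmult_assoc, Rinv_l by lra.
    assert (Y * Rabs W <= Y * (4801 * K1 p)) by (apply Rmult_le_compat_l; lra).
    nra.
  - rewrite Hl1, Rabs_mult, Hcc.
    assert (Rabs (- dd p * Y * W + Y * W2) <= Y * (4 * K1 p * (4801 * K1 p) + 9700000 * K1 p)).
    { eapply Rle_trans; [apply Rabs_triang|]. rewrite !Rabs_mult, Rabs_Ropp, (Rabs_right Y), (Rabs_right (dd p)) by lra.
      assert (dd p * Rabs W <= 4 * K1 p * (4801 * K1 p)) by (apply Rmult_le_compat; lra).
      nra. }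
    assert (Rabs (- dd p * Y * W + Y * W2) <= 19205 * K1 p) by nra.
    replace (2 / (K1 p * K2 p) * Rabs (- dd p * Y * W + Y * W2)) with
      (2 * Rabs (- dd p * Y * W + Y * W2) / (K1 p * K2 p)) by (field; lra).
    apply (Rmult_le_reg_r (K1 p * K2 p)); [nra|]. unfold Rdiv. rewrite Rmult_assoc, Rinv_l by nra.
    nra.
Qed.

Lemma bet_bnd p t : good p -> Rabs (bet p t) <= 1/100 /\ Rabs (bet1 p t) <= 1.
Proof.
  intros H. pose proof (basic p H) as (H400 & HK1p & HK2p & HT & HLp).
  pose proof (consts p H) as (Hsa4 & Hsb4 & Hd4 & He & He1 & HLK).
  pose proof H as H'. gd H'.
  unfold bet, bet1.
  pose proof (s1_b (tC p t)). pose proof (s2_b (tC p t)). pose proof (s3_b (tC p t)).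
  set (a1 := s1 (tC p t)) in *. set (a2 := s2 (tC p t)) in *. set (a3 := s3 (tC p t)) in *.
  assert (HK22 : 0 < K2 p ^ 2) by (apply pow_lt; lra).
  assert (Hab : forall x B, Rabs x <= B * K2 p ^ 2 -> Rabs (x / K2 p ^ 2) <= B).
  { intros x B Hx. rewrite Rabs_div by lra. rewrite (Rabs_right (K2 p ^ 2)) by lra.
    apply (Rmult_le_reg_r (K2 p ^ 2)); [lra|]. unfold Rdiv. rewrite Rmult_assoc, Rinv_l by lra. lra. }
  assert (Hsl : 0 <= sb p * L p <= 4 * L p) by (split; nra).
  assert (HLL : L p * 1000000000 * 1000000000 <= K2 p * K2 p) by nra.
  apply Rabs_le_between in H0. apply Rabs_le_between in H1. apply Rabs_le_between in H2.
  assert (P1a : - (12 * L p) <= sb p * L p * a1 <= 12 * L p) by (clear - Hsl H0 HLp; split; nra).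
  assert (P1b : - (120 * L p) <= sb p * L p * a2 <= 120 * L p) by (clear - Hsl H1 HLp; split; nra).
  assert (Q1a : - (12 * (K2 p * L p)) <= K2 p * (sb p * L p * a1) <= 12 * (K2 p * L p)) by (clear - P1a HK2p; split; nra).
  assert (Q1b : - (120 * (K2 p * L p)) <= K2 p * (sb p * L p * a2) <= 120 * (K2 p * L p)) by (clear - P1b HK2p; split; nra).
  assert (P2 : 0 <= a1 * a1 <= 9) by (clear - H0; split; nra).
  assert (Q2 : 0 <= (L p * L p) * (a1 * a1) <= 9 * (L p * L p)) by (clear - P2 HLp; split; nra).
  assert (P3a : - 90 <= a1 * a2 <= 90) by (clear - H0 H1; split; nra).
  assert (Q3 : - (90 * (L p * L p)) <= (L p * L p) * (a1 * a2) <= 90 * (L p * L p)) by (clear - P3a HLp; split; nra).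
  assert (Q4 : - (30 * L p) <= L p * a2 <= 30 * L p) by (clear - H1 HLp; split; nra).
  assert (Q5 : - (210 * L p) <= L p * a3 <= 210 * L p) by (clear - H2 HLp; split; nra).
  assert (R1 : K2 p * L p * 1000000000 <= K2 p * K2 p) by (clear - HLK HK2p; nra).
  assert (R2 : L p * L p * 1000000000 * 1000000000 <= K2 p * K2 p) by (clear - HLK HLp; nra).
  assert (R3 : L p * 1000000000 * 10000000000000000000000000 <= K2 p * K2 p) by (clear - HLK HK1 HK12 HLp; nra).
  split; apply Hab; apply Rabs_le; replace (K2 p ^ 2) with (K2 p * K2 p) by ring.
  - replace (-2 * K2 p * sb p * L p * (400 * a1) + (L p * (400 * a1)) ^ 2 + L p * (160000 * a2))
     with (-800 * (K2 p * (sb p * L p * a1)) + 160000 * ((L p * L p) * (a1 * a1)) + 160000 * (L p * a2)) by ring.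
    remember (K2 p * (sb p * L p * a1)) as m1. remember ((L p * L p) * (a1 * a1)) as m2. remember (L p * a2) as m3.
    remember (K2 p * L p) as n1. remember (L p * L p) as n2. remember (K2 p * K2 p) as n3.
    clear - Q1a Q2 Q4 R1 R2 R3 HLp. split; lra.
  - replace (-2 * K2 p * sb p * L p * (160000 * a2) + 2 * (L p * (400 * a1)) * (L p * (160000 * a2)) + L p * (64000000 * a3))
     with (-320000 * (K2 p * (sb p * L p * a2)) + 128000000 * ((L p * L p) * (a1 * a2)) + 64000000 * (L p * a3)) by ring.
    remember (K2 p * (sb p * L p * a2)) as m1. remember ((L p * L p) * (a1 * a2)) as m2. remember (L p * a3) as m3.
    remember (K2 p * L p) as n1. remember (L p * L p) as n2. remember (K2 p * K2 p) as n3.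
    clear - Q1b Q3 Q5 R1 R2 R3 HLp. split; lra.
Qed.


Lemma F0_pos p t : good p -> 0 < F0 p t.
Proof. intros H; gd H. unfold F0. apply Rmult_lt_0_compat; [lra|apply exp_pos]. Qed.
Lemma G0_pos p t : good p -> 0 < G0 p t.
Proof. intros H; gd H. unfold G0. apply Rmult_lt_0_compat; [lra|apply exp_pos]. Qed.
Lemma EE_b p t : good p -> 0 < EE p t <= 1.
Proof. intros H. pose proof (basic p H) as (_ & _ & _ & _ & HLp). split. apply exp_pos.
  unfold EE. apply Rle_trans with (exp 0); [apply exp_mono|rewrite exp_0; lra]. pose proof (s0_range (tC p t)). nra. Qed.

Lemma f_bnd p t : good p ->
  Rabs (ff p t) <= F0 p t /\ Rabs (ff1 p t) <= 5 * K1 p * F0 p t /\ Rabs (ff2 p t) <= 17 * K1 p ^ 2 * F0 p t.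
Proof.
  intros H. pose proof (basic p H) as (H400 & HK1p & HK2p & HT & HLp).
  pose proof (consts p H) as (Hsa4 & Hsb4 & Hd4 & He & He1 & HLK).
  pose proof (F0_pos p t H) as HF. pose proof H as H'. gd H'.
  pose proof (s0_range (tB p t)). pose proof (s1_b (tB p t)) as B1. pose proof (s2_b (tB p t)) as B2.
  apply Rabs_le_between in B1. apply Rabs_le_between in B2.
  set (z0 := s0 (tB p t)) in *. set (z1 := s1 (tB p t)) in *. set (z2 := s2 (tB p t)) in *.
  assert (HK : 0 < K1 p * sa p < 4 * K1 p) by (split; nra).
  assert (X1 : 0 <= K1 p * sa p * (1 - z0) <= 4 * K1 p) by (clear - HK H0; split; nra).
  assert (X2 : 0 <= (K1 p * sa p) ^ 2 * (1 - z0) <= 16 * K1 p ^ 2).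
  { clear - HK H0. split. apply Rmult_le_pos; [apply pow_le|]; lra.
    assert ((K1 p * sa p) ^ 2 <= (4 * K1 p) ^ 2) by (apply pow_incr; lra). nra. }
  assert (X3 : - (12 * K1 p) <= K1 p * sa p * z1 <= 12 * K1 p) by (clear - HK B1; split; nra).
  assert (X4 : K1 p * K1 p = K1 p ^ 2) by ring.
  unfold ff, ff1, ff2. fold z0 z1 z2.
  split; [|split].
  - rewrite Rabs_mult, (Rabs_right (F0 p t)) by lra. rewrite Rabs_right by lra. nra.
  - replace (- (K1 p * sa p) * F0 p t * (1 - z0) - F0 p t * (200 * z1)) with
      (F0 p t * (- (K1 p * sa p * (1 - z0)) - 200 * z1)) by ring.
    rewrite Rabs_mult, (Rabs_right (F0 p t)) by lra. rewrite Rmult_comm. apply Rmult_le_compat_r; [lra|].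
    apply Rabs_le. split; lra.
  - replace ((K1 p * sa p) ^ 2 * F0 p t * (1 - z0) + 2 * (K1 p * sa p) * F0 p t * (200 * z1) - F0 p t * (40000 * z2)) with
      (F0 p t * ((K1 p * sa p) ^ 2 * (1 - z0) + 400 * (K1 p * sa p * z1) - 40000 * z2)) by ring.
    rewrite Rabs_mult, (Rabs_right (F0 p t)) by lra. rewrite Rmult_comm. apply Rmult_le_compat_r; [lra|].
    apply Rabs_le. split; nra.
Qed.

Lemma g_bnd p t : good p ->
  Rabs (gg p t) <= G0 p t /\ Rabs (gg1 p t) <= 8 * K2 p * G0 p t /\ Rabs (gg2 p t) <= 100 * K2 p ^ 2 * G0 p t.
Proof.
  intros H. pose proof (basic p H) as (H400 & HK1p & HK2p & HT & HLp).
  pose proof (consts p H) as (Hsa4 & Hsb4 & Hd4 & He & He1 & HLK).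
  pose proof (G0_pos p t H) as HG. pose proof (EE_b p t H) as HE. pose proof H as H'. gd H'.
  pose proof (s0_range (tA p t)) as A0. pose proof (s1_b (tA p t)) as A1b. pose proof (s2_b (tA p t)) as A2b.
  pose proof (s1_b (tC p t)) as C1b. pose proof (s2_b (tC p t)) as C2b.
  apply Rabs_le_between in A1b. apply Rabs_le_between in A2b.
  apply Rabs_le_between in C1b. apply Rabs_le_between in C2b.
  unfold gg, gg1, gg2, Gd1, Gd2, A1, A2, Ed1, Ed2.
  set (a0 := s0 (tA p t)) in *. set (a1 := s1 (tA p t)) in *. set (a2 := s2 (tA p t)) in *.
  set (b1 := s1 (tC p t)) in *. set (b2 := s2 (tC p t)) in *. set (E := EE p t) in *. set (G := G0 p t) in *.
  assert (HK : 0 < K2 p * sb p < 4 * K2 p) by (split; nra).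
  assert (HGE : 0 < G * E) by nra.
  assert (HL' : L p <= K2 p / 1000000000) by lra.
  split; [|split].
  - replace (G * a0 * E) with ((G * E) * a0) by ring. rewrite Rabs_mult, (Rabs_right (G*E)) by lra.
    rewrite Rabs_right by lra. assert (G * E <= G) by nra. nra.
  - replace (- (K2 p * sb p) * G * a0 * E + G * (K1 p * a1) * E + G * a0 * (E * (L p * (400 * b1)))) with
      ((G * E) * (- (K2 p * sb p * a0) + K1 p * a1 + 400 * (L p * (a0 * b1)))) by ring.
    rewrite Rabs_mult, (Rabs_right (G*E)) by lra.
    assert (Y : Rabs (- (K2 p * sb p * a0) + K1 p * a1 + 400 * (L p * (a0 * b1))) <= 8 * K2 p).
    { assert (- 3 <= a0 * b1 <= 3) by (clear - A0 C1b; split; nra).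
      assert (- (3 * L p) <= L p * (a0 * b1) <= 3 * L p) by (clear - H0 HLp; split; nra).
      assert (0 <= K2 p * sb p * a0 <= 4 * K2 p) by (clear - HK A0; split; nra).
      assert (- (3 * K1 p) <= K1 p * a1 <= 3 * K1 p) by (clear - A1b HK1p; split; nra).
      apply Rabs_le; split; lra. }
    assert (G * E <= G) by nra. pose proof (Rabs_pos (- (K2 p * sb p * a0) + K1 p * a1 + 400 * (L p * (a0 * b1)))).
    nra.
  - replace ((K2 p * sb p) ^ 2 * G * a0 * E + G * (K1 p ^ 2 * a2) * E +
      G * a0 * (E * ((L p * (400 * b1)) ^ 2 + L p * (160000 * b2))) +
      2 * (- (K2 p * sb p) * G * (K1 p * a1) * E + - (K2 p * sb p) * G * a0 * (E * (L p * (400 * b1))) +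
        G * (K1 p * a1) * (E * (L p * (400 * b1))))) with
      ((G * E) * ((K2 p * sb p) ^ 2 * a0 + K1 p ^ 2 * a2 + 160000 * ((L p * L p) * (a0 * (b1 * b1)))
        + 160000 * (L p * (a0 * b2)) - 2 * ((K2 p * sb p) * (K1 p * a1))
        - 800 * ((K2 p * sb p) * (L p * (a0 * b1))) + 800 * (K1 p * L p * (a1 * b1)))) by ring.
    rewrite Rabs_mult, (Rabs_right (G*E)) by lra.
    assert (Y : Rabs ((K2 p * sb p) ^ 2 * a0 + K1 p ^ 2 * a2 + 160000 * ((L p * L p) * (a0 * (b1 * b1)))
        + 160000 * (L p * (a0 * b2)) - 2 * ((K2 p * sb p) * (K1 p * a1))
        - 800 * ((K2 p * sb p) * (L p * (a0 * b1))) + 800 * (K1 p * L p * (a1 * b1))) <= 100 * K2 p ^ 2).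
    { assert (W1 : 0 <= (K2 p * sb p) ^ 2 * a0 <= 16 * K2 p ^ 2).
      { assert ((K2 p * sb p) ^ 2 <= (4 * K2 p) ^ 2) by (apply pow_incr; lra).
        assert (0 <= (K2 p * sb p) ^ 2) by (apply pow_le; lra). clear - H0 H1 A0. split; nra. }
      assert (W2 : - (30 * K2 p ^ 2) <= K1 p ^ 2 * a2 <= 30 * K2 p ^ 2).
      { assert (K1 p ^ 2 <= K2 p ^ 2) by (apply pow_incr; lra).
        assert (0 <= K1 p ^ 2) by (apply pow_le; lra). clear - H0 H1 A2b. split; nra. }
      assert (W3a : 0 <= a0 * (b1 * b1) <= 9) by (clear - A0 C1b; split; nra).
      assert (W3 : 0 <= (L p * L p) * (a0 * (b1 * b1)) <= 9 * (L p * L p)) by (clear - W3a HLp; split; nra).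
      assert (W4a : - 30 <= a0 * b2 <= 30) by (clear - A0 C2b; split; nra).
      assert (W4 : - (30 * L p) <= L p * (a0 * b2) <= 30 * L p) by (clear - W4a HLp; split; nra).
      assert (W5a : - (3 * K1 p) <= K1 p * a1 <= 3 * K1 p) by (clear - A1b HK1p; split; nra).
      assert (W5 : - (12 * (K2 p * K1 p)) <= (K2 p * sb p) * (K1 p * a1) <= 12 * (K2 p * K1 p)) by (clear - W5a HK HK1p; split; nra).
      assert (W6a : - 3 <= a0 * b1 <= 3) by (clear - A0 C1b; split; nra).
      assert (W6b : - (3 * L p) <= L p * (a0 * b1) <= 3 * L p) by (clear - W6a HLp; split; nra).
      assert (W6 : - (12 * (K2 p * L p)) <= (K2 p * sb p) * (L p * (a0 * b1)) <= 12 * (K2 p * L p)) by (clear - W6b HK HLp; split; nra).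
      assert (W7a : - 9 <= a1 * b1 <= 9) by (clear - A1b C1b; split; nra).
      assert (W7 : - (9 * (K1 p * L p)) <= K1 p * L p * (a1 * b1) <= 9 * (K1 p * L p)) by (assert (0 <= K1 p * L p) by nra; clear - W7a H0; split; nra).
      assert (R1 : K2 p * K1 p <= K2 p ^ 2) by (simpl; nra).
      assert (R2 : K2 p * L p * 1000000000 <= K2 p ^ 2) by (simpl; nra).
      assert (R3 : K1 p * L p * 1000000000 <= K2 p ^ 2) by (simpl; nra).
      assert (R4 : L p * L p * 1000000000 <= K2 p ^ 2) by (simpl; nra).
      assert (R5 : L p * 1000000000 <= K2 p ^ 2) by (simpl; nra).
      apply Rabs_le. clear - W1 W2 W3 W4 W5 W6 W7 R1 R2 R3 R4 R5 HLp. split; lra. }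
    assert (G * E <= G) by nra.
    pose proof (Rabs_pos ((K2 p * sb p) ^ 2 * a0 + K1 p ^ 2 * a2 + 160000 * ((L p * L p) * (a0 * (b1 * b1)))
        + 160000 * (L p * (a0 * b2)) - 2 * ((K2 p * sb p) * (K1 p * a1))
        - 800 * ((K2 p * sb p) * (L p * (a0 * b1))) + 800 * (K1 p * L p * (a1 * b1)))).
    assert (0 <= K2 p ^ 2) by (apply pow_le; lra).
    nra.
Qed.


Lemma small_coefs p t : good p ->
  Rabs (mu p t) <= 1/400 /\ Rabs (lam p t) <= 1/400 /\ K2 p * Rabs (mu p t) <= 1 /\ K2 p * Rabs (lam p t) <= 1
  /\ Rabs (mu1 p t) <= 1 /\ Rabs (lam1 p t) <= 1 /\ Rabs (bet p t) <= 1/100 /\ Rabs (bet1 p t) <= 1.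
Proof.
  intros H. pose proof (basic p H) as (H400 & HK1p & HK2p & HT & HLp). pose proof H as H'; gd H'.
  destruct (mu_bnd p t H). destruct (lam_bnd p t H). destruct (bet_bnd p t H).
  pose proof (Rabs_pos (mu p t)). pose proof (Rabs_pos (lam p t)).
  repeat split; auto; nra.
Qed.

Lemma trig_b x : Rabs (sin x) <= 1 /\ Rabs (cos x) <= 1.
Proof. split; apply Rabs_le; [apply SIN_bound|apply COS_bound]. Qed.

Lemma ellip p x y t xi1 xi2 : good p ->
  / 20 * (xi1 ^ 2 + xi2 ^ 2) <= quadform (AA p x y t) xi1 xi2 <= 20 * (xi1 ^ 2 + xi2 ^ 2).
Proof.
  intros H. pose proof (basic p H) as (H400 & HK1p & HK2p & HT & HLp).
  pose proof (small_coefs p t H) as (Hm & Hl & _ & _ & _ & _ & Hbt & _). pose proof H as H'; gd H'.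
  unfold quadform, AA; cbn [m11 m12 m21 m22].
  set (P := K2 p / (2 * K1 p) * mu p t * cos (K1 p * x) * cos (K2 p * y)).
  set (Q := lam p t * sin (K1 p * x) * sin (K2 p * y) + mu p t * sin (K1 p * x) * sin (K2 p * y)).
  set (R' := bet p t + K1 p / (2 * K2 p) * lam p t * cos (K1 p * x) * cos (K2 p * y)).
  destruct (trig_b (K1 p * x)) as [s1b c1b]. destruct (trig_b (K2 p * y)) as [s2b c2b].
  assert (HP : Rabs P <= 1/400).
  { unfold P. rewrite !Rabs_mult. rewrite (Rabs_right (K2 p / (2 * K1 p))) by (apply Rle_ge; unfold Rdiv; apply Rmult_le_pos; [lra|left; apply Rinv_0_lt_compat; lra]).
    assert (K2 p / (2 * K1 p) <= 1) by (apply (Rmult_le_reg_r (2 * K1 p)); [lra|]; field_simplify; lra).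
    pose proof (Rabs_pos (mu p t)). pose proof (Rabs_pos (cos (K1 p * x))). pose proof (Rabs_pos (cos (K2 p * y))).
    assert (0 <= K2 p / (2 * K1 p)) by (unfold Rdiv; apply Rmult_le_pos; [lra|left; apply Rinv_0_lt_compat; lra]).
    assert (K2 p / (2 * K1 p) * Rabs (mu p t) <= 1 / 400) by nra.
    assert (Rabs (cos (K1 p * x)) * Rabs (cos (K2 p * y)) <= 1) by nra.
    assert (0 <= Rabs (cos (K1 p * x)) * Rabs (cos (K2 p * y))) by nra. nra. }
  assert (HQ : Rabs Q <= 1/200).
  { unfold Q. eapply Rle_trans; [apply Rabs_triang|]. rewrite !Rabs_mult.
    pose proof (Rabs_pos (mu p t)). pose proof (Rabs_pos (lam p t)).
    pose proof (Rabs_pos (sin (K1 p * x))). pose proof (Rabs_pos (sin (K2 p * y))).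
    assert (Rabs (sin (K1 p * x)) * Rabs (sin (K2 p * y)) <= 1) by nra.
    assert (0 <= Rabs (sin (K1 p * x)) * Rabs (sin (K2 p * y))) by nra. nra. }
  assert (HR : Rabs R' <= 1/80).
  { unfold R'. eapply Rle_trans; [apply Rabs_triang|]. rewrite !Rabs_mult.
    rewrite (Rabs_right (K1 p / (2 * K2 p))) by (apply Rle_ge; unfold Rdiv; apply Rmult_le_pos; [lra|left; apply Rinv_0_lt_compat; lra]).
    assert (K1 p / (2 * K2 p) <= 1) by (apply (Rmult_le_reg_r (2 * K2 p)); [lra|]; field_simplify; lra).
    pose proof (Rabs_pos (lam p t)). pose proof (Rabs_pos (cos (K1 p * x))). pose proof (Rabs_pos (cos (K2 p * y))).
    assert (0 <= K1 p / (2 * K2 p)) by (unfold Rdiv; apply Rmult_le_pos; [lra|left; apply Rinv_0_lt_compat; lra]).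
    assert (K1 p / (2 * K2 p) * Rabs (lam p t) <= 1 / 400) by nra.
    assert (Rabs (cos (K1 p * x)) * Rabs (cos (K2 p * y)) <= 1) by nra.
    assert (0 <= Rabs (cos (K1 p * x)) * Rabs (cos (K2 p * y))) by nra. nra. }
  replace (xi1 * ((sa p * sa p + P) * xi1 + lam p t * sin (K1 p * x) * sin (K2 p * y) * xi2) +
    xi2 * (mu p t * sin (K1 p * x) * sin (K2 p * y) * xi1 +
      (sb p * sb p + bet p t + K1 p / (2 * K2 p) * lam p t * cos (K1 p * x) * cos (K2 p * y)) * xi2))
    with ((sa p * sa p + P) * (xi1 * xi1) + Q * (xi1 * xi2) + (sb p * sb p + R') * (xi2 * xi2))
    by (unfold Q, R'; ring).
  apply Rabs_le_between in HP. apply Rabs_le_between in HQ. apply Rabs_le_between in HR.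
  assert (X1 : 0 <= xi1 * xi1) by nra. assert (X2 : 0 <= xi2 * xi2) by nra.
  assert (X3 : 2 * Rabs (xi1 * xi2) <= xi1 * xi1 + xi2 * xi2).
  { destruct (Rle_lt_dec 0 (xi1 * xi2)); [rewrite Rabs_right by lra|rewrite Rabs_left by lra];
    pose proof (pow2_ge_0 (xi1 - xi2)); pose proof (pow2_ge_0 (xi1 + xi2)); nra. }
  assert (X4 : Rabs (Q * (xi1 * xi2)) <= 1/200 * Rabs (xi1 * xi2)).
  { rewrite Rabs_mult. apply Rmult_le_compat_r. apply Rabs_pos. apply Rabs_le; lra. }
  apply Rabs_le_between in X4. pose proof (Rabs_pos (xi1 * xi2)).
  assert (Y1 : - (1/400) * (xi1 * xi1) <= P * (xi1 * xi1) <= 1/400 * (xi1 * xi1)) by (clear - HP X1; split; nra).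
  assert (Y2 : - (1/80) * (xi2 * xi2) <= R' * (xi2 * xi2) <= 1/80 * (xi2 * xi2)) by (clear - HR X2; split; nra).
  assert (Y3 : 1/10 * (xi1 * xi1) <= sa p * sa p * (xi1 * xi1) <= 10 * (xi1 * xi1)) by (clear - Ha X1; split; nra).
  assert (Y4 : 1/10 * (xi2 * xi2) <= sb p * sb p * (xi2 * xi2) <= 10 * (xi2 * xi2)) by (clear - Hb X2; split; nra).
  replace (xi1 ^ 2) with (xi1 * xi1) by ring. replace (xi2 ^ 2) with (xi2 * xi2) by ring.
  replace ((sa p * sa p + P) * (xi1 * xi1) + Q * (xi1 * xi2) + (sb p * sb p + R') * (xi2 * xi2)) with
    (sa p * sa p * (xi1 * xi1) + P * (xi1 * xi1) + Q * (xi1 * xi2) + sb p * sb p * (xi2 * xi2) + R' * (xi2 * xi2)) by ring.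
  clear - Y1 Y2 Y3 Y4 X1 X2 X3 X4. split; lra.
Qed.

Lemma abs3 a b c : Rabs (a * b * c) = Rabs a * Rabs b * Rabs c.
Proof. rewrite !Rabs_mult; ring. Qed.

Lemma bnd_prod (A B C : R) (xa xb xc : R) : Rabs xa <= A -> Rabs xb <= B -> Rabs xc <= C ->
  Rabs (xa * xb * xc) <= A * B * C.
Proof. intros. rewrite abs3. pose proof (Rabs_pos xa). pose proof (Rabs_pos xb). pose proof (Rabs_pos xc).
  apply Rmult_le_compat; try nra; apply Rmult_le_compat; nra. Qed.

Lemma bp_all p : good p ->
  bounded_partials (e11 (AA p)) 10 /\ bounded_partials (e12 (AA p)) 10 /\
  bounded_partials (e21 (AA p)) 10 /\ bounded_partials (e22 (AA p)) 10.
Proof.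
  intros H. pose proof (basic p H) as (H400 & HK1p & HK2p & HT & HLp). pose proof H as H'; gd H'.
  assert (Hcc1 : C1f (fun _ : R => 1) (fun _ => 0)) by apply C1f_const.
  assert (Hcd : forall c x, is_derive (fun _ : R => c) x 0) by (intros; apply isd_const).
  assert (q1 : 0 <= K2 p / (2 * K1 p) <= 1).
  { split. unfold Rdiv; apply Rmult_le_pos; [lra|left; apply Rinv_0_lt_compat; lra].
    apply (Rmult_le_reg_r (2 * K1 p)); [lra|]; field_simplify; lra. }
  assert (q2 : 0 <= K1 p / (2 * K2 p) <= 1/2).
  { split. unfold Rdiv; apply Rmult_le_pos; [lra|left; apply Rinv_0_lt_compat; lra].
    apply (Rmult_le_reg_r (2 * K2 p)); [lra|]; field_simplify; lra. }
  split; [|split; [|split]]; intros x y t;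
    pose proof (small_coefs p t H) as (Hm & Hl & HmK & HlK & Hm1 & Hl1 & Hbt & Hbt1);
    destruct (trig_b (K1 p * x)) as [s1b c1b]; destruct (trig_b (K2 p * y)) as [s2b c2b];
    pose proof (Rabs_pos (mu p t)); pose proof (Rabs_pos (lam p t)).
  - rewrite e11_eq. rewrite (dx_sep2 _ _ _ _ _ _ (fun _ => 0) (fun x => - K1 p * sin (K1 p * x)) (Hcd _) (proj1 (C1f_cos _))).
    rewrite (dy_sep2 _ _ _ _ _ _ (fun _ => 0) (fun y => - K2 p * sin (K2 p * y)) (Hcd _) (proj1 (C1f_cos _))).
    rewrite (dt_sep2 _ _ _ _ _ _ (fun _ => 0) (fun t => K2 p / (2 * K1 p) * mu1 p t) (Hcd _) (proj1 (C1f_scal _ _ _ (C1f_mu p)))).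
    unfold sep2. repeat first [rewrite Rmult_0_l | rewrite Rmult_0_r | rewrite Rplus_0_l | rewrite Rplus_0_r].
    split; [|split].
    + replace (K2 p / (2 * K1 p) * mu p t * (- K1 p * sin (K1 p * x)) * cos (K2 p * y)) with
        ((- (K2 p / 2) * mu p t) * sin (K1 p * x) * cos (K2 p * y)) by (field; lra).
      eapply Rle_trans; [apply (bnd_prod (1/2) 1 1); auto|lra].
      rewrite Rabs_mult, Rabs_Ropp, Rabs_right by lra. nra.
    + replace (K2 p / (2 * K1 p) * mu p t * cos (K1 p * x) * (- K2 p * sin (K2 p * y))) with
        ((- (K2 p / (2 * K1 p)) * (K2 p * mu p t)) * cos (K1 p * x) * sin (K2 p * y)) by ring.
      eapply Rle_trans; [apply (bnd_prod 1 1 1); auto|lra].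
      rewrite !Rabs_mult, Rabs_Ropp, (Rabs_right (K2 p / (2 * K1 p))), (Rabs_right (K2 p)) by lra. nra.
    + eapply Rle_trans; [apply (bnd_prod 1 1 1); auto|lra].
      rewrite Rabs_mult, Rabs_right by lra. nra.
  - rewrite e12_eq. rewrite (dx_sep2 _ _ _ _ _ _ (fun x => K1 p * cos (K1 p * x)) (fun _ => 0) (proj1 (C1f_sin _)) (Hcd _)).
    rewrite (dy_sep2 _ _ _ _ _ _ (fun y => K2 p * cos (K2 p * y)) (fun _ => 0) (proj1 (C1f_sin _)) (Hcd _)).
    rewrite (dt_sep2 _ _ _ _ _ _ (lam1 p) (fun _ => 0) (lam_d p) (Hcd _)).
    unfold sep2. repeat first [rewrite Rmult_0_l | rewrite Rmult_0_r | rewrite Rplus_0_l | rewrite Rplus_0_r].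
    split; [|split].
    + replace (lam p t * (K1 p * cos (K1 p * x)) * sin (K2 p * y)) with ((K1 p * lam p t) * cos (K1 p * x) * sin (K2 p * y)) by ring.
      eapply Rle_trans; [apply (bnd_prod 1 1 1); auto|lra].
      rewrite Rabs_mult, (Rabs_right (K1 p)) by lra. nra.
    + replace (lam p t * sin (K1 p * x) * (K2 p * cos (K2 p * y))) with ((K2 p * lam p t) * sin (K1 p * x) * cos (K2 p * y)) by ring.
      eapply Rle_trans; [apply (bnd_prod 1 1 1); auto|lra].
      rewrite Rabs_mult, (Rabs_right (K2 p)) by lra. nra.
    + eapply Rle_trans; [apply (bnd_prod 1 1 1); auto|lra].
  - rewrite e21_eq. rewrite (dx_sep2 _ _ _ _ _ _ (fun x => K1 p * cos (K1 p * x)) (fun _ => 0) (proj1 (C1f_sin _)) (Hcd _)).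
    rewrite (dy_sep2 _ _ _ _ _ _ (fun y => K2 p * cos (K2 p * y)) (fun _ => 0) (proj1 (C1f_sin _)) (Hcd _)).
    rewrite (dt_sep2 _ _ _ _ _ _ (mu1 p) (fun _ => 0) (mu_d p) (Hcd _)).
    unfold sep2. repeat first [rewrite Rmult_0_l | rewrite Rmult_0_r | rewrite Rplus_0_l | rewrite Rplus_0_r].
    split; [|split].
    + replace (mu p t * (K1 p * cos (K1 p * x)) * sin (K2 p * y)) with ((K1 p * mu p t) * cos (K1 p * x) * sin (K2 p * y)) by ring.
      eapply Rle_trans; [apply (bnd_prod 1 1 1); auto|lra].
      rewrite Rabs_mult, (Rabs_right (K1 p)) by lra. nra.
    + replace (mu p t * sin (K1 p * x) * (K2 p * cos (K2 p * y))) with ((K2 p * mu p t) * sin (K1 p * x) * cos (K2 p * y)) by ring.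
      eapply Rle_trans; [apply (bnd_prod 1 1 1); auto|lra].
      rewrite Rabs_mult, (Rabs_right (K2 p)) by lra. nra.
    + eapply Rle_trans; [apply (bnd_prod 1 1 1); auto|lra].
  - rewrite e22_eq. rewrite (dx_sep2 _ _ _ _ _ _ (fun _ => 0) (fun x => - K1 p * sin (K1 p * x)) (Hcd _) (proj1 (C1f_cos _))).
    rewrite (dy_sep2 _ _ _ _ _ _ (fun _ => 0) (fun y => - K2 p * sin (K2 p * y)) (Hcd _) (proj1 (C1f_cos _))).
    rewrite (dt_sep2 _ _ _ _ _ _ (bet1 p) (fun t => K1 p / (2 * K2 p) * lam1 p t) (proj1 (C1f_cplus _ _ _ (C1f_bet p))) (proj1 (C1f_scal _ _ _ (C1f_lam p)))).
    unfold sep2. repeat first [rewrite Rmult_0_l | rewrite Rmult_0_r | rewrite Rplus_0_l | rewrite Rplus_0_r].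
    split; [|split].
    + replace (K1 p / (2 * K2 p) * lam p t * (- K1 p * sin (K1 p * x)) * cos (K2 p * y)) with
        ((- (K1 p / (2 * K2 p)) * (K1 p * lam p t)) * sin (K1 p * x) * cos (K2 p * y)) by ring.
      eapply Rle_trans; [apply (bnd_prod 1 1 1); auto|lra].
      rewrite !Rabs_mult, Rabs_Ropp, (Rabs_right (K1 p / (2 * K2 p))), (Rabs_right (K1 p)) by lra.
      assert (K1 p * Rabs (lam p t) <= 1) by nra. clear - H2 q2 H1 HK1p. nra.
    + replace (K1 p / (2 * K2 p) * lam p t * cos (K1 p * x) * (- K2 p * sin (K2 p * y))) with
        ((- (K1 p / 2) * lam p t) * cos (K1 p * x) * sin (K2 p * y)) by (field; lra).
      eapply Rle_trans; [apply (bnd_prod 1 1 1); auto|lra].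
      rewrite Rabs_mult, Rabs_Ropp, Rabs_right by lra. nra.
    + eapply Rle_trans; [apply Rabs_triang|].
      assert (Rabs (bet1 p t * 1 * 1) <= 1) by (rewrite !Rmult_1_r; auto).
      assert (Rabs (K1 p / (2 * K2 p) * lam1 p t * cos (K1 p * x) * cos (K2 p * y)) <= 1).
      { eapply Rle_trans; [apply (bnd_prod 1 1 1); auto|lra]. rewrite Rabs_mult, Rabs_right by lra.
        pose proof (Rabs_pos (lam1 p t)). nra. }
      lra.
Qed.


Lemma Dff p : Derive (ff p) = ff1 p.
Proof. apply functional_extensionality; intro t. apply is_derive_unique, ff_d. Qed.
Lemma Dff1 p : Derive (ff1 p) = ff2 p.
Proof. apply functional_extensionality; intro t. apply is_derive_unique, ff1_d. Qed.
Lemma Dgg p : Derive (gg p) = gg1 p.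
Proof. apply functional_extensionality; intro t. apply is_derive_unique, gg_d. Qed.
Lemma Dgg1 p : Derive (gg1 p) = gg2 p.
Proof. apply functional_extensionality; intro t. apply is_derive_unique, gg1_d. Qed.

Lemma C21_ff p : C2_1 (ff p).
Proof.
  unfold C2_1. rewrite Dff, Dff1. repeat split; intros t.
  - eexists; apply ff_d.
  - eexists; apply ff1_d.
  - apply (ex_derive_continuous (ff p)); eexists; apply ff_d.
  - apply (ex_derive_continuous (ff1 p)); eexists; apply ff1_d.
  - apply (ex_derive_continuous (ff2 p)); apply ff2_ex.
Qed.
Lemma C21_gg p : C2_1 (gg p).
Proof.
  unfold C2_1. rewrite Dgg, Dgg1. repeat split; intros t.
  - eexists; apply gg_d.
  - eexists; apply gg1_d.
  - apply (ex_derive_continuous (gg p)); eexists; apply gg_d.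
  - apply (ex_derive_continuous (gg1 p)); eexists; apply gg1_d.
  - apply (ex_derive_continuous (gg2 p)); apply gg2_ex.
Qed.

Lemma main_p p a b T : good p -> a = sa p * sa p -> b = sb p * sb p -> intK (K1 p) -> intK (K2 p) ->
  t1 p + T8 p + 1/100 <= T ->
  transforms a b (fun x y t => c1 p * cos (K1 p * x) * exp (- (K1 p * sa p) * t))
     (fun x y t => c2 p * cos (K2 p * y) * exp (- (K2 p * sb p) * t)) (t1 p) T (uu p) (AA p)
  /\ reg_class 20 10 (AA p) /\ C2_1 (ff p) /\ C2_1 (gg p)
  /\ (forall x y t, t1 p <= t <= T -> uu p x y t = ff p t * cos (K1 p * x) + gg p t * cos (K2 p * y))
  /\ (forall (alpha : nat) t, (alpha <= 2)%nat -> t1 p <= t <= T ->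
       Rabs (Derive_n (ff p) alpha t) <= 100 * c1 p * Rpower (K1 p) (7 * INR alpha / 3) * exp (- (K1 p * sa p) * t)
       /\ Rabs (Derive_n (gg p) alpha t) <= 100 * c2 p * K2 p ^ alpha * exp (- (K2 p * sb p) * t)).
Proof.
  intros H Ea Eb I1 I2 HT.
  pose proof (basic p H) as (H400 & HK1p & HK2p & HT8 & HLp).
  assert (Hbef : forall t, t <= t1 p -> tA p t <= 0 /\ tB p t <= 0 /\ tC p t <= 0).
  { intros t Ht. unfold tA, tB, tC. repeat split; nra. }
  assert (Haft : forall t, T <= t -> 1 <= tA p t /\ 1 <= tB p t /\ 1 <= tC p t).
  { intros t Ht. unfold tA, tB, tC. repeat split; nra. }
  split; [|split; [|split; [|split; [|split]]]].
  - unfold transforms. split; [apply uu_per; auto|]. split; [apply AA_per; auto|].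
    split; [apply uu_C2|]. split; [apply AA_C1|]. split; [intros; apply wave0; auto|].
    split; [|split; [|split]].
    + intros x y t Ht. destruct (Hbef t Ht) as (A & B & C).
      unfold uu, sep2, ff, gg, F0. rewrite (s0_lo (tB p t)), (s0_lo (tA p t)) by auto. ring.
    + intros x y t Ht. destruct (Haft t Ht) as (A & B & C).
      unfold uu, sep2, ff, gg, G0, EE. rewrite (s0_hi (tB p t)), (s0_hi (tA p t)), (s0_hi (tC p t)) by auto.
      replace (- L p * (1 - 1)) with 0 by ring. rewrite exp_0. ring.
    + intros x y t Ht. destruct (Hbef t Ht) as (A & B & C).
      unfold AA, diagmat, mu, lam, bet. rewrite (s1_out (tA p t)), (s2_out (tA p t)), (s1_out (tB p t)), (s2_out (tB p t)),
        (s1_out (tC p t)), (s2_out (tC p t)) by auto.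
      rewrite Ea, Eb. f_equal; field; lra.
    + intros x y t Ht. destruct (Haft t Ht) as (A & B & C).
      unfold AA, diagmat, mu, lam, bet. rewrite (s1_out (tA p t)), (s2_out (tA p t)), (s1_out (tB p t)), (s2_out (tB p t)),
        (s1_out (tC p t)), (s2_out (tC p t)) by auto.
      rewrite Ea, Eb. f_equal; field; lra.
  - split; [|split]. intros; apply ellip; auto. apply AA_C1. apply bp_all; auto.
  - apply C21_ff.
  - apply C21_gg.
  - intros x y t _. unfold uu, sep2. ring.
  - intros alpha t Ha Ht.
    pose proof (f_bnd p t H) as (F0b & F1b & F2b). pose proof (g_bnd p t H) as (G0b & G1b & G2b).
    pose proof (F0_pos p t H) as HF. pose proof (G0_pos p t H) as HG.
    unfold F0 in *. unfold G0 in *.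
    assert (R1 : K1 p <= Rpower (K1 p) (7 * 1 / 3)).
    { rewrite <- (Rpower_1 (K1 p)) at 1 by lra. apply Rle_Rpower; lra. }
    assert (R2 : K1 p ^ 2 <= Rpower (K1 p) (7 * 2 / 3)).
    { rewrite <- Rpower_pow by lra. apply Rle_Rpower; [lra|]. simpl; lra. }
    destruct alpha as [|[|[|alpha]]]; [| | |exfalso; lia].
    + simpl Derive_n. replace (7 * INR 0 / 3) with 0 by (simpl; field). rewrite Rpower_O by lra.
      split; nra.
    + change (Derive_n (ff p) 1 t) with (Derive (ff p) t). change (Derive_n (gg p) 1 t) with (Derive (gg p) t).
      rewrite Dff, Dgg. replace (INR 1) with 1 by reflexivity. simpl pow.
      split; nra.
    + change (Derive_n (ff p) 2 t) with (Derive (Derive (ff p)) t). change (Derive_n (gg p) 2 t) with (Derive (Derive (gg p)) t).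
      rewrite Dff, Dff1, Dgg, Dgg1. replace (INR 2) with 2 by (simpl; ring).
      split; nra.
Qed.


Theorem mainTheorem11 :
  exists K M : R,
  forall (k k' : Z) (a b : R),
    K <= IZR k -> (k < k')%Z -> (k' <= 2 * k)%Z ->
    1 / 10 < a < 10 -> 1 / 10 < b < 10 ->
    IZR k' * sqrt b < IZR k * sqrt a ->
    let C := 1 / Rpower (IZR k) (4 / 3)
             + 8 * ln (IZR k) / (IZR k * sqrt a - IZR k' * sqrt b)
             + sqrt (4 * ln (IZR k)) / Rpower (IZR k') (1 / 3)
             + 1 / 100 in
    forall (t1 c1 c2 : R),
      0 <= t1 -> 0 < c1 -> 0 < c2 ->
      c1 * exp (- (IZR k * sqrt a) * t1) = c2 * exp (- (IZR k' * sqrt b) * t1) ->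
      exists (u : fn3) (A : matfn) (f g : R -> R),
        transforms a b
          (fun x y t => c1 * cos (IZR k * x) * exp (- (IZR k * sqrt a) * t))
          (fun x y t => c2 * cos (IZR k' * y) * exp (- (IZR k' * sqrt b) * t))
          t1 (t1 + C) u A
        /\ reg_class 20 10 A
        /\ C2_1 f /\ C2_1 g
        /\ (forall x y t, t1 <= t <= t1 + C ->
              u x y t = f t * cos (IZR k * x) + g t * cos (IZR k' * y))
        /\ (forall (alpha : nat) (t : R), (alpha <= 2)%nat -> t1 <= t <= t1 + C ->
              Rabs (Derive_n f alpha t)
                <= M * c1 * Rpower (IZR k) (7 * INR alpha / 3) * exp (- (IZR k * sqrt a) * t)
              /\ Rabs (Derive_n g alpha t)
                <= M * c2 * IZR k' ^ alpha * exp (- (IZR k' * sqrt b) * t)).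
Proof.
  exists 10000000000000000000000000, 100.
  intros k k' a b HK Hkk Hk2 Ha Hb Hab C t1 c1 c2 Ht1 Hc1 Hc2 Hc.
  set (p := Prm (IZR k) (IZR k') (sqrt a) (sqrt b) t1 c1 c2
              (8 * ln (IZR k) / (IZR k * sqrt a - IZR k' * sqrt b)) (IZR k / 1000000000)).
  assert (Hkk' : IZR k < IZR k') by (apply IZR_lt; auto).
  assert (Hk2' : IZR k' <= 2 * IZR k) by (rewrite <- mult_IZR; apply IZR_le; auto).
  assert (Hsa : 0 < sqrt a) by (apply sqrt_lt_R0; lra).
  assert (Hsb : 0 < sqrt b) by (apply sqrt_lt_R0; lra).
  assert (Hg : good p).
  { unfold good, dd; simpl. rewrite !sqrt_sqrt by lra.
    repeat split; auto; lra. }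
  assert (Hint : forall z : Z, (0 < z)%Z -> intK (IZR z)).
  { intros z Hz. exists (Z.to_nat z). rewrite INR_IZR_INZ, Z2Nat.id by lia. reflexivity. }
  assert (Hkpos : (0 < k)%Z) by (apply lt_IZR; lra).
  assert (HC : t1 + 8 * ln (IZR k) / (IZR k * sqrt a - IZR k' * sqrt b) + 1 / 100 <= t1 + C).
  { unfold C. assert (0 < Rpower (IZR k) (4 / 3)) by (unfold Rpower; apply exp_pos).
    assert (0 < Rpower (IZR k') (1 / 3)) by (unfold Rpower; apply exp_pos).
    assert (0 <= 1 / Rpower (IZR k) (4 / 3)) by (unfold Rdiv; apply Rmult_le_pos; [lra|left; apply Rinv_0_lt_compat; lra]).
    assert (0 <= sqrt (4 * ln (IZR k)) / Rpower (IZR k') (1 / 3)).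
    { unfold Rdiv; apply Rmult_le_pos; [apply sqrt_pos|left; apply Rinv_0_lt_compat; lra]. }
    lra. }
  destruct (main_p p a b (t1 + C) Hg) as (T1 & T2 & T3 & T4 & T5 & T6).
  - simpl. rewrite sqrt_sqrt; lra.
  - simpl. rewrite sqrt_sqrt; lra.
  - apply Hint; auto.
  - apply Hint; lia.
  - exact HC.
  - exists (uu p), (AA p), (ff p), (gg p).
    split; [exact T1|]. split; [exact T2|]. split; [exact T3|]. split; [exact T4|].
    split; [exact T5|]. exact T6.
Qed.
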